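(* Let $\alpha\in\mathbb{R}\setminus\mathbb{Q}$ and consider the $\mathbb{Z}$-action on $\mathbb{R}/\mathbb{Z}$ given by $n\cdot\theta=\theta+n\alpha$. Then this system has a symbolic almost one-to-one extension (a subshift $(X,\mathbb{Z})$ of $\{0,1\}^{\mathbb{Z}}$ with an almost one-to-one factor map onto the rotation) which is tame but not null.
   Context: A factor map $\pi$ is almost one-to-one if $\{x:\pi^{-1}(\pi(x))=\{x\}\}$ is dense. For a subshift $X\subseteq\{0,1\}^{\mathbb{Z}}$ with shift action $\sigma$, a set $J\subseteq\mathbb{Z}$ is an independence set for $(A_0,A_1)$ ($A_j\subseteq X$) if for all finite $I\subseteq J$ and $a\in\{0,1\}^I$, $\bigcap_{i\in I}\sigma^{-i}A_{a_i}\ne\emptyset$. The system is tame if there are no distinct $x_0,x_1$ all of whose neighbourhood pairs have infinite independence sets, and null if there are no distinct $x_0,x_1$ all of whose neighbourhood pairs have finite independence sets of arbitrarily large size. *)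

(* Defs.v *)
From Stdlib Require Import Reals ZArith List.
Open Scope R_scope.

Definition config := Z -> bool.

Definition shiftn (i : Z) (x : config) : config := fun n => x (n + i)%Z.

(* x and y agree on the window [-N, N] (basic cylinder neighbourhoods of the
   product topology). *)
Definition agree (N : Z) (x y : config) : Prop :=
  forall n : Z, (Z.abs n <= N)%Z -> x n = y n.

Definition subshift (X : config -> Prop) : Prop :=
  (exists x, X x) /\
  (forall x, (forall N, exists y, X y /\ agree N x y) -> X x) /\
  (forall x, X x -> X (shiftn 1 x)) /\
  (forall x, X x -> X (shiftn (-1) x)).

(* The circle R/Z is represented by the fundamental domain [0,1);
   the class of r is frac_part r.  Metric: distance to the nearest integer. *)
Definition circ_dist (a b : R) : R :=
  Rmin (frac_part (a - b)) (1 - frac_part (a - b)).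

Definition irrational (alpha : R) : Prop :=
  forall p q : Z, q <> 0%Z -> alpha * IZR q <> IZR p.

Definition factor_map_onto_rotation (X : config -> Prop) (alpha : R)
    (pi : config -> R) : Prop :=
  (forall x, X x -> 0 <= pi x < 1) /\
  (forall x, X x -> forall eps, eps > 0 ->
     exists N, forall y, X y -> agree N x y -> circ_dist (pi x) (pi y) < eps) /\
  (forall theta, 0 <= theta < 1 -> exists x, X x /\ pi x = theta) /\
  (forall x, X x -> pi (shiftn 1 x) = frac_part (pi x + alpha)).

(* {x : pi^{-1}(pi x) = {x}} is dense in X. *)
Definition almost_one_to_one (X : config -> Prop) (pi : config -> R) : Prop :=
  forall x, X x -> forall N, exists y, X y /\ agree N x y /\
    (forall z, X z -> pi z = pi y -> z = y).

Definition nbhd (X : config -> Prop) (x : config) (U : config -> Prop) : Prop :=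
  exists N, forall y, X y -> agree N x y -> U y.

Definition indep_set (X : config -> Prop) (A0 A1 : config -> Prop)
    (J : Z -> Prop) : Prop :=
  forall I : list Z, (forall i, In i I -> J i) ->
  forall a : Z -> bool,
    exists x, X x /\ forall i, In i I -> (if a i then A1 else A0) (shiftn i x).

Definition infinite_set (J : Z -> Prop) : Prop :=
  ~ exists l : list Z, forall i, J i -> In i l.

Definition tame (X : config -> Prop) : Prop :=
  ~ exists x0 x1, X x0 /\ X x1 /\ x0 <> x1 /\
    forall U0 U1, nbhd X x0 U0 -> nbhd X x1 U1 ->
      exists J, indep_set X U0 U1 J /\ infinite_set J.

Definition null (X : config -> Prop) : Prop :=
  ~ exists x0 x1, X x0 /\ X x1 /\ x0 <> x1 /\
    forall U0 U1, nbhd X x0 U0 -> nbhd X x1 U1 ->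
      forall n : nat, exists l : list Z,
        NoDup l /\ (n <= length l)%nat /\ indep_set X U0 U1 (fun i => In i l).

(* Main.v *)
Require Import Defs.
From Stdlib Require Import Reals ZArith List Lra Lia Psatz Classical ClassicalEpsilon FunctionalExtensionality Rtopology.
Open Scope R_scope.

Definition near (a b e : R) : Prop := exists k : Z, Rabs (a - b - IZR k) < e.

Lemma Int_part_plus_int r k : Int_part (r + IZR k) = (Int_part r + k)%Z.
Proof.
  symmetry; apply Int_part_spec. destruct (base_Int_part r) as [H1 H2].
  rewrite plus_IZR; lra.
Qed.

Lemma frac_plus_int r k : frac_part (r + IZR k) = frac_part r.
Proof. unfold frac_part. rewrite Int_part_plus_int, plus_IZR. ring. Qed.

Lemma frac_id r : 0 <= r < 1 -> frac_part r = r.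
Proof.
  intros H. unfold frac_part. rewrite <- (Int_part_spec r 0); simpl; lra.
Qed.

Lemma frac_bounds r : 0 <= frac_part r < 1.
Proof. destruct (base_fp r); lra. Qed.

Lemma frac_decomp r : r = IZR (Int_part r) + frac_part r.
Proof. unfold frac_part; ring. Qed.

Lemma frac_frac r : frac_part (frac_part r) = frac_part r.
Proof. apply frac_id, frac_bounds. Qed.

Lemma frac_eq_int a b : frac_part a = frac_part b -> exists k, a = b + IZR k.
Proof.
  intros H. exists (Int_part a - Int_part b)%Z. rewrite minus_IZR.
  rewrite (frac_decomp a), (frac_decomp b) at 1. rewrite H. ring.
Qed.

Lemma near_shift_l a b e k : near (a + IZR k) b e <-> near a b e.
Proof.
  split; intros [j Hj].
  - exists (j - k)%Z. rewrite minus_IZR. replace (a - b - (IZR j - IZR k)) with (a + IZR k - b - IZR j) by ring. auto.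
  - exists (j + k)%Z. rewrite plus_IZR. replace (a + IZR k - b - (IZR j + IZR k)) with (a - b - IZR j) by ring. auto.
Qed.

Lemma near_shift_r a b e k : near a (b + IZR k) e <-> near a b e.
Proof.
  split; intros [j Hj].
  - exists (j + k)%Z. rewrite plus_IZR. replace (a - b - (IZR j + IZR k)) with (a - (b + IZR k) - IZR j) by ring. auto.
  - exists (j - k)%Z. rewrite minus_IZR. replace (a - (b + IZR k) - (IZR j - IZR k)) with (a - b - IZR j) by ring. auto.
Qed.

Lemma near_frac_l a b e : near (frac_part a) b e <-> near a b e.
Proof.
  rewrite <- (near_shift_l (frac_part a) b e (Int_part a)).
  replace (frac_part a + IZR (Int_part a)) with a by (unfold frac_part; ring). tauto.
Qed.

Lemma near_frac_r a b e : near a (frac_part b) e <-> near a b e.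
Proof.
  rewrite <- (near_shift_r a (frac_part b) e (Int_part b)).
  replace (frac_part b + IZR (Int_part b)) with b by (unfold frac_part; ring). tauto.
Qed.

Lemma near_refl a e : 0 < e -> near a a e.
Proof. intros; exists 0%Z. simpl. replace (a - a - 0) with 0 by ring. rewrite Rabs_R0; auto. Qed.

Lemma near_sym a b e : near a b e -> near b a e.
Proof.
  intros [k Hk]. exists (- k)%Z. rewrite opp_IZR.
  replace (b - a - - IZR k) with (- (a - b - IZR k)) by ring. rewrite Rabs_Ropp; auto.
Qed.

Lemma near_trans a b c e1 e2 : near a b e1 -> near b c e2 -> near a c (e1 + e2).
Proof.
  intros [k Hk] [j Hj]. exists (k + j)%Z. rewrite plus_IZR.
  replace (a - c - (IZR k + IZR j)) with ((a - b - IZR k) + (b - c - IZR j)) by ring.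
  eapply Rle_lt_trans; [apply Rabs_triang|]. lra.
Qed.

Lemma near_mono a b e1 e2 : e1 <= e2 -> near a b e1 -> near a b e2.
Proof. intros H [k Hk]; exists k; lra. Qed.

Lemma near_add a b c e : near a b e -> near (a + c) (b + c) e.
Proof. intros [k Hk]; exists k. replace (a + c - (b + c) - IZR k) with (a - b - IZR k) by ring. auto. Qed.

Lemma near_add2 a b c d e1 e2 : near a b e1 -> near c d e2 -> near (a + c) (b + d) (e1 + e2).
Proof.
  intros [k Hk] [j Hj]. exists (k + j)%Z. rewrite plus_IZR.
  replace (a + c - (b + d) - (IZR k + IZR j)) with ((a - b - IZR k) + (c - d - IZR j)) by ring.
  eapply Rle_lt_trans; [apply Rabs_triang|]. lra.
Qed.

Lemma near_sub2 a b c d e1 e2 : near a b e1 -> near c d e2 -> near (a - c) (b - d) (e1 + e2).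
Proof.
  intros H1 H2. unfold Rminus. apply near_add2; auto.
  destruct H2 as [j Hj]. exists (- j)%Z. rewrite opp_IZR.
  replace (- c - - d - - IZR j) with (- (c - d - IZR j)) by ring. rewrite Rabs_Ropp; auto.
Qed.

Lemma Int_part_nonneg d : 0 <= d -> (0 <= Int_part d)%Z.
Proof.
  intros H. destruct (base_Int_part d) as [H1 H2].
  destruct (Z_lt_le_dec (Int_part d) 0) as [Hl|Hl]; auto.
  assert (IZR (Int_part d) <= -1) by (apply IZR_le; lia).
  lra.
Qed.

Lemma Int_part_neg d : d < 0 -> (Int_part d <= -1)%Z.
Proof.
  intros H. destruct (base_Int_part d) as [H1 H2].
  destruct (Z_lt_le_dec (Int_part d) 0) as [Hl|Hl]; [lia|].
  apply IZR_le in Hl. lra.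
Qed.

Lemma near_circ a b e : near a b e -> circ_dist a b < e.
Proof.
  intros [k Hk]. unfold circ_dist.
  set (d := a - b - IZR k) in *.
  assert (Hf : frac_part (a - b) = frac_part d).
  { replace (a - b) with (d + IZR k) by (unfold d; ring). apply frac_plus_int. }
  rewrite Hf. destruct (Rle_dec 0 d) as [Hd|Hd].
  - apply Rabs_pos_eq in Hd as Hd'. rewrite Hd' in Hk.
    pose proof (Int_part_nonneg d Hd). apply IZR_le in H.
    unfold frac_part. eapply Rle_lt_trans; [apply Rmin_l|]. simpl in H. lra.
  - assert (d < 0) by lra. rewrite Rabs_left in Hk by lra.
    pose proof (Int_part_neg d H). apply IZR_le in H0.
    unfold frac_part. eapply Rle_lt_trans; [apply Rmin_r|]. lra.
Qed.

Lemma circ_near a b e : circ_dist a b < e -> near a b e.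
Proof.
  unfold circ_dist. intros H. pose proof (frac_bounds (a - b)) as Hb.
  unfold Rmin in H.
  destruct (Rle_dec (frac_part (a - b)) (1 - frac_part (a - b))) as [Hl|Hl].
  - exists (Int_part (a - b)). unfold frac_part in *. rewrite Rabs_pos_eq; lra.
  - exists (Int_part (a - b) + 1)%Z. rewrite plus_IZR. unfold frac_part in *.
    rewrite Rabs_left1; lra.
Qed.

Lemma near_all_eq a b : (forall e, e > 0 -> near a b e) -> frac_part a = frac_part b.
Proof.
  intros H.
  assert (Hc : circ_dist a b = 0).
  { assert (0 <= circ_dist a b).
    { unfold circ_dist. pose proof (frac_bounds (a - b)). apply Rmin_glb; lra. }
    destruct (Rle_lt_or_eq_dec _ _ H0) as [Hl|Hl]; auto.
    pose proof (near_circ _ _ _ (H _ Hl)). lra. }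
  unfold circ_dist in Hc. pose proof (frac_bounds (a - b)) as Hb.
  assert (Hz : frac_part (a - b) = 0).
  { unfold Rmin in Hc. destruct Rle_dec; lra. }
  destruct (fp_nat _ Hz) as [c Hc'].
  replace a with (b + IZR c) by lra. apply frac_plus_int.
Qed.

Lemma near_interval a P e : near a P e -> 0 <= P - e -> P + e <= 1 ->
  P - e < frac_part a < P + e.
Proof.
  intros [k Hk] H1 H2. apply Rabs_def2 in Hk.
  replace a with ((a - IZR k) + IZR k) by ring. rewrite frac_plus_int.
  rewrite frac_id; lra.
Qed.

Lemma near_frac_self a e : 0 < e -> near a (frac_part a) e.
Proof. intros; apply near_frac_r, near_refl; auto. Qed.

Lemma irr_int alpha : irrational alpha -> forall k K, IZR k * alpha = IZR K -> k = 0%Z.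
Proof.
  intros Hi k K H. destruct (Z.eq_dec k 0) as [|Hk]; auto. exfalso.
  apply (Hi K k Hk). rewrite Rmult_comm; auto.
Qed.

Lemma irr_rat alpha : irrational alpha -> forall k u v K, v <> 0%Z ->
  IZR k * alpha = IZR u / IZR v + IZR K -> k = 0%Z.
Proof.
  intros Hi k u v K Hv H.
  assert (Hv' : IZR v <> 0) by (apply not_0_IZR; auto).
  assert (IZR (k * v) * alpha = IZR (u + K * v)).
  { rewrite mult_IZR, plus_IZR, mult_IZR.
    replace (IZR k * IZR v * alpha) with ((IZR k * alpha) * IZR v) by ring. rewrite H.
    field; auto. }
  apply irr_int in H0; auto. lia.
Qed.

Lemma density_small alpha : irrational alpha -> forall eps, eps > 0 ->
  exists n m : Z, 0 < IZR n * alpha + IZR m < eps.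
Proof.
  intros Hi.
  set (E := fun y => exists n m : Z, 0 < IZR n * alpha + IZR m /\ y = - (IZR n * alpha + IZR m)).
  assert (Hb : bound E). { exists 0. intros y [n [m [H1 H2]]]. lra. }
  assert (Hne : exists y, E y). { exists (-1). exists 0%Z, 1%Z. simpl. split; lra. }
  destruct (completeness E Hb Hne) as [L [HL1 HL2]].
  set (g := - L).
  assert (Hlow : forall n m : Z, 0 < IZR n * alpha + IZR m -> g <= IZR n * alpha + IZR m).
  { intros n m H. unfold g. assert (E (- (IZR n * alpha + IZR m))) by (exists n, m; auto).
    apply HL1 in H0. lra. }
  assert (Happrox : forall d, d > g -> exists n m : Z, 0 < IZR n * alpha + IZR m < d).
  { intros d Hd. apply NNPP. intros Hn.
    assert (HUB : is_upper_bound E (- d)).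
    { intros y [n [m [H1 H2]]]. subst y.
      destruct (Rlt_le_dec (IZR n * alpha + IZR m) d) as [Hl|Hl].
      - exfalso; apply Hn; exists n, m; split; auto.
      - lra. }
    apply HL2 in HUB. unfold g in Hd. lra. }
  assert (Hg0 : 0 <= g).
  { unfold g. assert (L <= 0); [|lra]. apply HL2. intros y [n [m [H1 H2]]]. lra. }
  intros eps Heps.
  destruct (Rle_lt_or_eq_dec _ _ Hg0) as [Hgp|Hg0'].
  2:{ apply Happrox. lra. }
  exfalso.
  destruct (Happrox (2 * g)) as [n1 [m1 [Ha1 Ha2]]]; [lra|].
  assert (Hag : IZR n1 * alpha + IZR m1 = g).
  { pose proof (Hlow n1 m1 Ha1).
    destruct (Rle_lt_or_eq_dec _ _ H) as [Hlt|Heq]; auto.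
    destruct (Happrox (IZR n1 * alpha + IZR m1)) as [n2 [m2 [Hb1 Hb2]]]; [lra|].
    pose proof (Hlow n2 m2 Hb1).
    assert (0 < IZR (n1 - n2) * alpha + IZR (m1 - m2)) by (rewrite !minus_IZR; lra).
    pose proof (Hlow _ _ H1). rewrite !minus_IZR in H2. lra. }
  assert (Hmult : forall n m : Z, exists k : Z, IZR n * alpha + IZR m = IZR k * g).
  { intros n m. set (x := IZR n * alpha + IZR m).
    set (k := Int_part (x / g)). exists k.
    destruct (base_Int_part (x / g)) as [B1 B2]. fold k in B1, B2.
    set (r := x - IZR k * g).
    assert (Hr : r = IZR (n - k * n1) * alpha + IZR (m - k * m1)).
    { unfold r, x. rewrite !minus_IZR, !mult_IZR. rewrite <- Hag. ring. }
    assert (Hr0 : 0 <= r).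
    { unfold r. assert (IZR k * g <= x / g * g) by (apply Rmult_le_compat_r; lra).
      replace (x / g * g) with x in H by (field; lra). lra. }
    assert (Hr1 : r < g).
    { unfold r. assert (x / g * g < (IZR k + 1) * g) by (apply Rmult_lt_compat_r; lra).
      replace (x / g * g) with x in H by (field; lra). lra. }
    destruct (Rle_lt_or_eq_dec _ _ Hr0) as [Hrp|Hrz].
    - rewrite Hr in Hrp. pose proof (Hlow _ _ Hrp). rewrite <- Hr in H. lra.
    - unfold r in Hrz. lra. }
  destruct (Hmult 0%Z 1%Z) as [k1 Hk1]. destruct (Hmult 1%Z 0%Z) as [k2 Hk2].
  simpl in Hk1, Hk2.
  assert (IZR k1 * alpha = IZR k2).
  { assert (Ha : alpha = IZR k2 * g) by lra. assert (H1' : 1 = IZR k1 * g) by lra.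
    rewrite Ha. transitivity (IZR k2 * (IZR k1 * g)); [ring| rewrite <- H1'; ring]. }
  apply (irr_int alpha Hi) in H. subst k1. simpl in Hk1. lra.
Qed.

Lemma uniform_density alpha : irrational alpha -> forall eps, eps > 0 ->
  exists N : nat, forall p, exists n : Z, (Z.abs n <= Z.of_nat N)%Z /\ near (IZR n * alpha) p eps.
Proof.
  intros Hi eps Heps.
  destruct (density_small alpha Hi eps Heps) as [n0 [m0 [H1 H2]]].
  set (h := IZR n0 * alpha + IZR m0) in *.
  set (K := Z.to_nat (up (1 / h))).
  exists (K * Z.to_nat (Z.abs n0))%nat. intros p.
  set (j := Int_part (frac_part p / h)).
  destruct (base_Int_part (frac_part p / h)) as [B1 B2]. fold j in B1, B2.
  pose proof (frac_bounds p) as Fp.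
  assert (Hj0 : (0 <= j)%Z).
  { apply Int_part_nonneg. unfold Rdiv; apply Rmult_le_pos; [lra| left; apply Rinv_0_lt_compat; lra]. }
  assert (Hjh : IZR j * h <= frac_part p < IZR j * h + h).
  { assert (IZR j * h <= frac_part p / h * h) by (apply Rmult_le_compat_r; lra).
    assert (frac_part p / h * h < (IZR j + 1) * h) by (apply Rmult_lt_compat_r; lra).
    replace (frac_part p / h * h) with (frac_part p) in * by (field; lra). lra. }
  assert (HjK : (j <= Z.of_nat K)%Z).
  { unfold K. destruct (archimed (1 / h)) as [A1 A2].
    assert (frac_part p / h < 1 / h).
    { unfold Rdiv. apply Rmult_lt_compat_r; [apply Rinv_0_lt_compat; lra| lra]. }
    assert (IZR j < IZR (up (1/h))) by lra. apply lt_IZR in H0.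
    rewrite Z2Nat.id; lia. }
  exists (j * n0)%Z. split.
  - rewrite Z.abs_mul, Nat2Z.inj_mul, Z2Nat.id by lia. rewrite Z.abs_eq by lia.
    apply Z.mul_le_mono_nonneg_r; lia.
  - apply near_frac_r. exists (- (j * m0))%Z.
    rewrite opp_IZR, !mult_IZR.
    replace (IZR j * IZR n0 * alpha - frac_part p - - (IZR j * IZR m0)) with (IZR j * h - frac_part p) by (unfold h; ring).
    rewrite Rabs_left1; lra.
Qed.

Definition Wb (q : R) : bool :=
  if Rle_dec q 0 then true
  else if Rle_dec q (1/8) then Z.even (Int_part (/ q))
  else if Rle_dec q (1/2) then false else true.

Lemma Int_part_eq r c : IZR c <= r < IZR c + 1 -> Int_part r = c.
Proof. intros H. symmetry. apply Int_part_spec. lra. Qed.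

Lemma W_neg q : -1/2 < q < 0 -> Wb (frac_part q) = true.
Proof.
  intros H. replace q with ((q + 1) + IZR (-1)) by (simpl; ring).
  rewrite frac_plus_int, frac_id by lra. unfold Wb.
  destruct Rle_dec; auto. destruct Rle_dec; [lra|]. destruct Rle_dec; [lra|]. auto.
Qed.

Lemma W_zero : Wb (frac_part 0) = true.
Proof. rewrite frac_id by lra. unfold Wb. destruct Rle_dec; auto; lra. Qed.

Lemma W_small q : 0 < q <= 1/8 -> Wb (frac_part q) = Z.even (Int_part (/ q)).
Proof.
  intros H. rewrite frac_id by lra. unfold Wb.
  destruct Rle_dec; [lra|]. destruct Rle_dec; [auto|lra].
Qed.

Lemma W_mid q : 1/8 < q <= 1/2 -> Wb (frac_part q) = false.
Proof.
  intros H. rewrite frac_id by lra. unfold Wb.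
  destruct Rle_dec; [lra|]. destruct Rle_dec; [lra|]. destruct Rle_dec; [auto|lra].
Qed.

Lemma W_high q : 1/2 < q < 1 -> Wb (frac_part q) = true.
Proof.
  intros H. rewrite frac_id by lra. unfold Wb.
  destruct Rle_dec; [lra|]. destruct Rle_dec; [lra|]. destruct Rle_dec; [lra|auto].
Qed.

Lemma Wb_frac p : 0 <= p < 1 -> Wb (frac_part p) = Wb p.
Proof. intros; rewrite frac_id; auto. Qed.

Lemma cell_value q c : (8 <= c)%Z -> / (IZR c + 1) < q <= / IZR c -> Int_part (/ q) = c.
Proof.
  intros Hc H. apply IZR_le in Hc.
  assert (0 < / (IZR c + 1)) by (apply Rinv_0_lt_compat; lra).
  apply Int_part_eq. split.
  - rewrite <- (Rinv_inv (IZR c)). apply Rinv_le_contravar; lra.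
  - rewrite <- (Rinv_inv (IZR c + 1)). apply Rinv_lt_contravar; [|lra].
    apply Rmult_lt_0_compat; lra.
Qed.

Lemma Int_inv_ge8 q : 0 < q <= 1/8 -> (8 <= Int_part (/ q))%Z.
Proof.
  intros H. assert (8 <= / q).
  { replace 8 with (/ (1/8)) by field. apply Rinv_le_contravar; lra. }
  destruct (base_Int_part (/ q)) as [B1 B2].
  assert (IZR 7 < IZR (Int_part (/ q))) by (simpl; lra). apply lt_IZR in H1. lia.
Qed.

Lemma cell_bounds q : 0 < q <= 1/8 ->
  / (IZR (Int_part (/ q)) + 1) < q <= / IZR (Int_part (/ q)).
Proof.
  intros H. pose proof (Int_inv_ge8 q H) as H8. apply IZR_le in H8.
  destruct (base_Int_part (/ q)) as [B1 B2]. set (c := IZR (Int_part (/ q))) in *.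
  split.
  - rewrite <- (Rinv_inv q). apply Rinv_lt_contravar; [apply Rmult_lt_0_compat; try lra; apply Rinv_0_lt_compat; lra| lra].
  - rewrite <- (Rinv_inv q). apply Rinv_le_contravar; lra.
Qed.

Lemma LC_left p : 0 <= p < 1 -> exists rho, rho > 0 /\
  forall q, p - rho < q <= p -> Wb (frac_part q) = Wb p.
Proof.
  intros Hp.
  destruct (Req_dec p 0) as [H0|H0].
  { subst p. exists (1/2). split; [lra|]. intros q Hq.
    rewrite <- (Wb_frac 0) by lra. rewrite W_zero.
    destruct (Req_dec q 0) as [->|Hq0]; [apply W_zero|]. apply W_neg; lra. }
  destruct (Rle_dec p (1/8)) as [H8|H8].
  { assert (Hp0 : 0 < p) by lra. pose proof (cell_bounds p (conj Hp0 H8)) as [C1 C2].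
    exists (p - / (IZR (Int_part (/ p)) + 1)). split; [lra|]. intros q Hq.
    rewrite <- (Wb_frac p) by lra.
    assert (Hpp : 0 < p) by lra.
    assert (0 < / (IZR (Int_part (/ p)) + 1)).
    { apply Rinv_0_lt_compat. pose proof (Int_inv_ge8 p (conj Hpp H8)). apply IZR_le in H. lra. }
    rewrite !W_small by lra. f_equal. apply cell_value; [apply Int_inv_ge8; lra| lra]. }
  destruct (Rle_dec p (1/2)) as [H2|H2].
  { exists (p - 1/8). split; [lra|]. intros q Hq. rewrite <- (Wb_frac p) by lra.
    rewrite !W_mid; lra. }
  exists (p - 1/2). split; [lra|]. intros q Hq. rewrite <- (Wb_frac p) by lra.
  rewrite !W_high; lra.
Qed.

Definition notB (p : R) : Prop := p <> 0 /\ p <> 1/2 /\ forall c : Z, p <> / IZR c.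

Lemma LC_both p : 0 <= p < 1 -> notB p -> exists rho, rho > 0 /\
  forall q, Rabs (q - p) < rho -> Wb (frac_part q) = Wb p.
Proof.
  intros Hp [N0 [N2 Nc]].
  assert (Hpp : 0 < p) by lra.
  destruct (Rle_dec p (1/8)) as [H8|H8].
  { assert (H8' : p < 1/8).
    { destruct (Rle_lt_or_eq_dec _ _ H8); auto. exfalso. apply (Nc 8%Z). rewrite e. simpl. lra. }
    pose proof (cell_bounds p (conj Hpp H8)) as [C1 C2].
    set (c := Int_part (/ p)) in *.
    assert (C2' : p < / IZR c).
    { destruct (Rle_lt_or_eq_dec _ _ C2); auto. exfalso; apply (Nc c); auto. }
    pose proof (Int_inv_ge8 p (conj Hpp H8)) as Hc8. fold c in Hc8.
    assert (0 < / (IZR c + 1)). { apply Rinv_0_lt_compat. apply IZR_le in Hc8. lra. }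
    exists (Rmin (Rmin (p - / (IZR c + 1)) (/ IZR c - p)) (1/8 - p)).
    split. { apply Rmin_pos; [apply Rmin_pos|]; lra. }
    intros q Hq. apply Rabs_def2 in Hq.
    pose proof (Rmin_l (Rmin (p - / (IZR c + 1)) (/ IZR c - p)) (1/8 - p)).
    pose proof (Rmin_r (Rmin (p - / (IZR c + 1)) (/ IZR c - p)) (1/8 - p)).
    pose proof (Rmin_l (p - / (IZR c + 1)) (/ IZR c - p)).
    pose proof (Rmin_r (p - / (IZR c + 1)) (/ IZR c - p)).
    rewrite <- (Wb_frac p) by lra. rewrite !W_small by lra. f_equal.
    apply cell_value; [exact Hc8|]. fold c. split; lra. }
  destruct (Rle_dec p (1/2)) as [H2|H2].
  { assert (p < 1/2) by lra.
    exists (Rmin (p - 1/8) (1/2 - p)). split; [apply Rmin_pos; lra|].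
    intros q Hq. apply Rabs_def2 in Hq.
    pose proof (Rmin_l (p - 1/8) (1/2 - p)). pose proof (Rmin_r (p - 1/8) (1/2 - p)).
    rewrite <- (Wb_frac p) by lra. rewrite !W_mid; lra. }
  exists (Rmin (p - 1/2) (1 - p)). split; [apply Rmin_pos; lra|].
  intros q Hq. apply Rabs_def2 in Hq.
  pose proof (Rmin_l (p - 1/2) (1 - p)). pose proof (Rmin_r (p - 1/2) (1 - p)).
  rewrite <- (Wb_frac p) by lra. rewrite !W_high; lra.
Qed.

Lemma LC_right p : 0 < p < 1 -> exists rho v, rho > 0 /\
  forall q, p < q < p + rho -> Wb (frac_part q) = v.
Proof.
  intros Hp.
  destruct (Rlt_dec p (1/8)) as [H8|H8].
  { pose proof (cell_bounds p (conj (proj1 Hp) (Rlt_le _ _ H8))) as [C1 C2].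
    set (c := Int_part (/ p)) in *.
    pose proof (Int_inv_ge8 p (conj (proj1 Hp) (Rlt_le _ _ H8))) as Hc8. fold c in Hc8.
    assert (Hc8' : 8 <= IZR c) by (apply IZR_le in Hc8; auto).
    destruct (Rle_lt_or_eq_dec _ _ C2) as [C2'|C2'].
    - exists (Rmin (/ IZR c - p) (1/8 - p)), (Z.even c). split; [apply Rmin_pos; lra|].
      intros q Hq. pose proof (Rmin_l (/ IZR c - p) (1/8 - p)). pose proof (Rmin_r (/ IZR c - p) (1/8 - p)).
      rewrite W_small by lra. f_equal. apply cell_value; auto. lra.
    -
      assert (Hc9 : (9 <= c)%Z).
      { destruct (Z.eq_dec c 8) as [E|E]; [|lia]. exfalso. rewrite E in C2'. simpl in C2'. lra. }
      assert (Hc9' : 9 <= IZR c) by (apply IZR_le in Hc9; auto).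
      assert (Hlt : / IZR c < / (IZR c - 1)) by (apply Rinv_lt_contravar; nra).
      exists (Rmin (/ (IZR c - 1) - p) (1/8 - p)), (Z.even (c - 1)). split; [apply Rmin_pos; lra|].
      intros q Hq. pose proof (Rmin_l (/ (IZR c - 1) - p) (1/8 - p)). pose proof (Rmin_r (/ (IZR c - 1) - p) (1/8 - p)).
      rewrite W_small by lra. f_equal. apply cell_value; [lia|].
      rewrite minus_IZR. simpl. replace (IZR c - 1 + 1) with (IZR c) by ring. lra. }
  destruct (Rlt_dec p (1/2)) as [H2|H2].
  { exists (1/2 - p), false. split; [lra|]. intros q Hq. apply W_mid; lra. }
  exists (1 - p), true. split; [lra|]. intros q Hq. apply W_high; lra.
Qed.

Definition r (alpha theta : R) : config := fun n => Wb (frac_part (theta + IZR n * alpha)).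
Definition Xs (alpha : R) (x : config) : Prop := forall N, exists theta, agree N x (r alpha theta).
Definition Cl (alpha : R) (x : config) (theta : R) : Prop :=
  forall eta, eta > 0 -> forall N, exists th, near th theta eta /\ agree N x (r alpha th).
Definition pi (alpha : R) (x : config) : R :=
  match excluded_middle_informative (exists th, 0 <= th < 1 /\ Cl alpha x th) with
  | left H => proj1_sig (constructive_indefinite_description _ H)
  | right _ => 0
  end.

Lemma agree_mono N M x y : (N <= M)%Z -> agree M x y -> agree N x y.
Proof. intros H A n Hn. apply A. lia. Qed.

Lemma agree_sym N x y : agree N x y -> agree N y x.
Proof. intros A n Hn. symmetry; auto. Qed.

Lemma agree_trans N x y z : agree N x y -> agree N y z -> agree N x z.
Proof. intros A B n Hn. rewrite A; auto. Qed.

Lemma r_shift_int alpha th k : r alpha (th + IZR k) = r alpha th.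
Proof.
  apply functional_extensionality. intros n. unfold r.
  replace (th + IZR k + IZR n * alpha) with ((th + IZR n * alpha) + IZR k) by ring.
  rewrite frac_plus_int; auto.
Qed.

Lemma r_frac alpha th : r alpha (frac_part th) = r alpha th.
Proof.
  rewrite (frac_decomp th) at 2. rewrite Rplus_comm. symmetry. apply r_shift_int.
Qed.

Lemma shift_r alpha th k : shiftn k (r alpha th) = r alpha (th + IZR k * alpha).
Proof.
  apply functional_extensionality. intros n. unfold shiftn, r.
  rewrite plus_IZR. f_equal. f_equal. ring.
Qed.

Lemma agree_shift N k x y : agree (N + Z.abs k) x y -> agree N (shiftn k x) (shiftn k y).
Proof. intros A n Hn. unfold shiftn. apply A. lia. Qed.

Lemma X_r alpha th : Xs alpha (r alpha th).
Proof. intros N. exists th. intros n _; auto. Qed.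

Lemma X_shift alpha x k : Xs alpha x -> Xs alpha (shiftn k x).
Proof.
  intros HX N. destruct (HX (N + Z.abs k)%Z) as [th Hth].
  exists (th + IZR k * alpha). rewrite <- shift_r. apply agree_shift; auto.
Qed.

Lemma X_closed alpha x : (forall N, exists y, Xs alpha y /\ agree N x y) -> Xs alpha x.
Proof.
  intros H N. destruct (H N) as [y [Hy A]]. destruct (Hy N) as [th Ht].
  exists th. eapply agree_trans; eauto.
Qed.

Lemma sep_aux alpha (Hi : irrational alpha) eps (N : nat) :
  0 < eps <= 1/4 ->
  (forall p, exists n : Z, (Z.abs n <= Z.of_nat N)%Z /\ near (IZR n * alpha) p (eps/4)) ->
  forall th th', eps <= frac_part (th' - th) <= 1/2 ->
  ~ agree (Z.of_nat N) (r alpha th) (r alpha th').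
Proof.
  intros He Hd th th' Hdd A.
  set (d := frac_part (th' - th)) in *.
  set (P := 1/2 - d/2).
  destruct (Hd (P - th)) as [n [Hn Hnear]].
  assert (N1 : near (th + IZR n * alpha) P (eps/4)).
  { replace P with (th + (P - th)) by ring. rewrite Rplus_comm. rewrite (Rplus_comm th).
    apply near_add. auto. }
  assert (N2 : near (th' + IZR n * alpha) (P + d) (eps/4)).
  { assert (Ed : th' = th + d + IZR (Int_part (th' - th))) by (unfold d, frac_part; ring).
    rewrite Ed. replace (th + d + IZR (Int_part (th' - th)) + IZR n * alpha) with
      ((th + IZR n * alpha + d) + IZR (Int_part (th' - th))) by ring.
    apply near_shift_l. apply near_add; auto. }
  apply near_interval in N1; [|unfold P; lra|unfold P; lra].
  apply near_interval in N2; [|unfold P; lra|unfold P; lra].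
  specialize (A n Hn). unfold r in A.
  rewrite <- (frac_frac (th + IZR n * alpha)) in A.
  rewrite <- (frac_frac (th' + IZR n * alpha)) in A.
  rewrite W_mid in A by (unfold P in *; lra).
  rewrite W_high in A by (unfold P in *; lra). discriminate.
Qed.

Lemma separation alpha (Hi : irrational alpha) eps : eps > 0 ->
  exists N : Z, forall th th', agree N (r alpha th) (r alpha th') -> near th th' eps.
Proof.
  intros He. set (e := Rmin eps (1/4)).
  assert (He' : 0 < e <= 1/4) by (unfold e; split; [apply Rmin_pos; lra| apply Rmin_r]).
  destruct (uniform_density alpha Hi (e/4)) as [N HN]; [lra|].
  exists (Z.of_nat N). intros th th' A.
  apply (near_mono _ _ e); [apply Rmin_l|].
  apply NNPP. intros Hn.
  pose proof (frac_bounds (th' - th)) as Fb.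
  set (d := frac_part (th' - th)) in *.
  destruct (Rlt_dec d e) as [Hl|Hl].
  { apply Hn. apply near_sym. exists (Int_part (th' - th)). unfold d, frac_part in *.
    rewrite Rabs_pos_eq; lra. }
  destruct (Rlt_dec (1 - e) d) as [Hh|Hh].
  { apply Hn. apply near_sym. exists (Int_part (th' - th) + 1)%Z. rewrite plus_IZR.
    unfold d, frac_part in *. rewrite Rabs_left1; lra. }
  destruct (Rle_dec d (1/2)) as [H2|H2].
  - apply (sep_aux alpha Hi e N He' HN th th'); auto. fold d. lra.
  - apply (sep_aux alpha Hi e N He' HN th' th); [|apply agree_sym; auto].
    assert (frac_part (th - th') = 1 - d).
    { replace (th - th') with ((1 - d) + IZR (- Int_part (th' - th) - 1)).
      - rewrite frac_plus_int, frac_id; lra.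
      - rewrite minus_IZR, opp_IZR. unfold d, frac_part. simpl. ring. }
    lra.
Qed.

Lemma Cl_exists alpha x : Xs alpha x -> exists th, 0 <= th < 1 /\ Cl alpha x th.
Proof.
  intros HX.
  assert (F : forall n : nat, {th | agree (Z.of_nat n) x (r alpha th)}).
  { intros n. apply constructive_indefinite_description. apply HX. }
  set (u := fun n => frac_part (proj1_sig (F n))).
  destruct (Bolzano_Weierstrass u (fun c => 0 <= c <= 1) (compact_P3 0 1)) as [l Hl].
  { intros n. unfold u. pose proof (frac_bounds (proj1_sig (F n))). lra. }
  exists (frac_part l). split; [apply frac_bounds|].
  intros eta Heta N.
  destruct (Hl (fun y => Rabs (y - l) < eta) (Z.to_nat N)) as [p [Hp Vp]].
  { exists (mkposreal eta Heta). intros y Hy. unfold disc in Hy. auto. }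
  exists (u p). split.
  - apply near_frac_r. exists 0%Z. simpl. replace (u p - l - 0) with (u p - l) by ring. auto.
  - unfold u. rewrite r_frac. destruct (F p) as [th Ht]; simpl.
    apply (agree_mono N (Z.of_nat p)); auto. lia.
Qed.

Lemma Cl_unique alpha (Hi : irrational alpha) x th1 th2 :
  Cl alpha x th1 -> Cl alpha x th2 -> frac_part th1 = frac_part th2.
Proof.
  intros C1 C2. apply near_all_eq. intros e He.
  destruct (separation alpha Hi (e/3)) as [N HN]; [lra|].
  destruct (C1 (e/3) ltac:(lra) N) as [a [Na Aa]].
  destruct (C2 (e/3) ltac:(lra) N) as [b [Nb Ab]].
  assert (near a b (e/3)) by (apply HN; eapply agree_trans; [apply agree_sym; eauto| eauto]).
  replace e with (e/3 + e/3 + e/3) by field.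
  apply (near_trans _ b); [apply (near_trans _ a); [apply near_sym; auto| auto]| auto].
Qed.

Lemma pi_range alpha x : 0 <= pi alpha x < 1.
Proof.
  unfold pi. destruct excluded_middle_informative as [H|H]; [|lra].
  destruct (constructive_indefinite_description _ H) as [th [Ht Hc]]; simpl; auto.
Qed.

Lemma pi_Cl alpha x : Xs alpha x -> Cl alpha x (pi alpha x).
Proof.
  intros HX. unfold pi. destruct excluded_middle_informative as [H|H].
  - destruct (constructive_indefinite_description _ H) as [th [Hr Ht]]; simpl; auto.
  - exfalso; apply H, Cl_exists; auto.
Qed.

Lemma pi_eq alpha (Hi : irrational alpha) x th : Xs alpha x -> 0 <= th < 1 -> Cl alpha x th -> pi alpha x = th.
Proof.
  intros HX Ht C. pose proof (Cl_unique alpha Hi x _ _ (pi_Cl alpha x HX) C).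
  rewrite !frac_id in H; auto. apply pi_range.
Qed.

Lemma Cl_shift alpha x th k : Cl alpha x th -> Cl alpha (shiftn k x) (th + IZR k * alpha).
Proof.
  intros C eta He N. destruct (C eta He (N + Z.abs k)%Z) as [a [Na Aa]].
  exists (a + IZR k * alpha). split.
  - apply near_add; auto.
  - rewrite <- shift_r. apply agree_shift; auto.
Qed.

Lemma Cl_frac alpha x th : Cl alpha x th -> Cl alpha x (frac_part th).
Proof.
  intros C eta He N. destruct (C eta He N) as [a [Na Aa]]. exists a; split; auto.
  apply near_frac_r; auto.
Qed.

Lemma pi_shift alpha (Hi : irrational alpha) x k : Xs alpha x ->
  pi alpha (shiftn k x) = frac_part (pi alpha x + IZR k * alpha).
Proof.
  intros HX. apply pi_eq; auto.
  - apply X_shift; auto.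
  - apply frac_bounds.
  - apply Cl_frac, Cl_shift, pi_Cl; auto.
Qed.

Lemma pi_r alpha (Hi : irrational alpha) th : pi alpha (r alpha th) = frac_part th.
Proof.
  apply pi_eq; auto. apply X_r. apply frac_bounds.
  apply Cl_frac. intros eta He N. exists th. split; [apply near_refl; auto|]. intros n _; auto.
Qed.

Lemma pi_cont alpha (Hi : irrational alpha) eps : eps > 0 ->
  exists N : Z, forall x y, Xs alpha x -> Xs alpha y -> agree N x y -> near (pi alpha x) (pi alpha y) eps.
Proof.
  intros He. destruct (separation alpha Hi (eps/3)) as [N HN]; [lra|].
  exists N. intros x y Hx Hy A.
  destruct (pi_Cl alpha x Hx (eps/3) ltac:(lra) N) as [a [Na Aa]].
  destruct (pi_Cl alpha y Hy (eps/3) ltac:(lra) N) as [b [Nb Ab]].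
  assert (near a b (eps/3)).
  { apply HN. apply (agree_trans N _ x); [apply agree_sym; auto|]. apply (agree_trans N _ y); auto. }
  replace eps with (eps/3 + eps/3 + eps/3) by field.
  apply (near_trans _ b); [apply (near_trans _ a); [apply near_sym; auto| auto]| auto].
Qed.

Lemma coord alpha z n p rho : Xs alpha z -> rho > 0 ->
  near (pi alpha z + IZR n * alpha) p rho ->
  (forall q, Rabs (q - p) < 2 * rho -> Wb (frac_part q) = Wb p) -> z n = Wb p.
Proof.
  intros HZ Hr Hn Hc.
  destruct (pi_Cl alpha z HZ rho Hr (Z.abs n)) as [a [Na Aa]].
  rewrite (Aa n ltac:(lia)). unfold r.
  assert (near (a + IZR n * alpha) p (rho + rho)).
  { apply (near_trans _ (pi alpha z + IZR n * alpha)); [apply near_add; auto| auto]. }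
  destruct H as [k Hk].
  replace (a + IZR n * alpha) with ((a + IZR n * alpha - IZR k) + IZR k) by ring.
  rewrite frac_plus_int. apply Hc. replace (2 * rho) with (rho + rho) by ring.
  replace (a + IZR n * alpha - IZR k - p) with (a + IZR n * alpha - p - IZR k) by ring; auto.
Qed.

Lemma finite_min (P : Z -> R -> Prop) (N : nat) :
  (forall n, exists rho, rho > 0 /\ P n rho) ->
  (forall n rho rho', 0 < rho' <= rho -> P n rho -> P n rho') ->
  exists rho, rho > 0 /\ forall n, (Z.abs n <= Z.of_nat N)%Z -> P n rho.
Proof.
  intros H Hm. induction N as [|N IH].
  - destruct (H 0%Z) as [rho [Hr Hp]]. exists rho; split; auto. intros n Hn.
    assert (n = 0%Z) by lia. subst; auto.
  - destruct IH as [r0 [Hr0 Hp0]].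
    destruct (H (Z.of_nat (S N))) as [r1 [Hr1 Hp1]].
    destruct (H (- Z.of_nat (S N))%Z) as [r2 [Hr2 Hp2]].
    exists (Rmin r0 (Rmin r1 r2)). split; [apply Rmin_pos; [|apply Rmin_pos]; auto|].
    pose proof (Rmin_l r0 (Rmin r1 r2)). pose proof (Rmin_r r0 (Rmin r1 r2)).
    pose proof (Rmin_l r1 r2). pose proof (Rmin_r r1 r2).
    assert (Hpos : 0 < Rmin r0 (Rmin r1 r2)) by (apply Rmin_pos; [|apply Rmin_pos]; auto).
    intros n Hn.
    destruct (Z_le_dec (Z.abs n) (Z.of_nat N)) as [Hl|Hl].
    + apply (Hm n r0); [lra|auto].
    + assert (n = Z.of_nat (S N) \/ n = (- Z.of_nat (S N))%Z) as [E|E] by lia; subst n.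
      * apply (Hm _ r1); [lra|auto].
      * apply (Hm _ r2); [lra|auto].
Qed.

Lemma orbit_notB alpha (Hi : irrational alpha) m : notB (frac_part (alpha / 2 + IZR m * alpha)).
Proof.
  set (x := alpha / 2 + IZR m * alpha).
  assert (Hx : IZR (2 * m + 1) * alpha = 2 * x) by (unfold x; rewrite plus_IZR, mult_IZR; simpl; field).
  assert (Hnz : (2 * m + 1 <> 0)%Z) by lia.
  pose proof (frac_decomp x) as Dx.
  split; [|split].
  - intros H0. rewrite H0 in Dx. apply Hnz. apply (irr_int alpha Hi _ (2 * Int_part x)).
    rewrite Hx, mult_IZR. simpl. lra.
  - intros H0. rewrite H0 in Dx. apply Hnz. apply (irr_int alpha Hi _ (2 * Int_part x + 1)).
    rewrite Hx, plus_IZR, mult_IZR. simpl. lra.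
  - intros c H0. destruct (Z.eq_dec c 0) as [Ec|Ec].
    + subst c. simpl in H0. rewrite Rinv_0 in H0. rewrite H0 in Dx.
      apply Hnz. apply (irr_int alpha Hi _ (2 * Int_part x)). rewrite Hx, mult_IZR. simpl. lra.
    + apply Hnz. apply (irr_rat alpha Hi _ 2 c (2 * Int_part x) Ec).
      assert (Ex : x = IZR (Int_part x) + / IZR c) by (rewrite <- H0; exact Dx).
      rewrite Hx, mult_IZR. rewrite Ex at 1. simpl. field. apply not_0_IZR; auto.
Qed.

Lemma X_subshift alpha : subshift (Xs alpha).
Proof.
  split; [exists (r alpha 0); apply X_r|]. split; [|split].
  - intros x H. apply X_closed. intros N. destruct (H N) as [y [Hy A]]. exists y; auto.
  - intros x H; apply X_shift; auto.
  - intros x H; apply X_shift; auto.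
Qed.

Lemma X_factor alpha (Hi : irrational alpha) : factor_map_onto_rotation (Xs alpha) alpha (pi alpha).
Proof.
  split; [|split; [|split]].
  - intros; apply pi_range.
  - intros x Hx eps He. destruct (pi_cont alpha Hi eps He) as [N HN]. exists N.
    intros y Hy A. apply near_circ. apply HN; auto.
  - intros th Ht. exists (r alpha th). split; [apply X_r|]. rewrite pi_r; auto. apply frac_id; auto.
  - intros x Hx. rewrite pi_shift; auto. f_equal. simpl. ring.
Qed.

Lemma X_a1 alpha (Hi : irrational alpha) : almost_one_to_one (Xs alpha) (pi alpha).
Proof.
  intros x Hx N.
  destruct (Hx N) as [th1 A1].
  set (M := Z.to_nat N).
  destruct (finite_min (fun n rho => forall q, frac_part (th1 + IZR n * alpha) - rho < q <= frac_part (th1 + IZR n * alpha) ->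
                        Wb (frac_part q) = Wb (frac_part (th1 + IZR n * alpha))) M) as [rho [Hr HP]].
  { intros n. apply LC_left. apply frac_bounds. }
  { intros n rho rho' Hrr HP q Hq. apply HP. lra. }
  destruct (uniform_density alpha Hi (rho/2) ltac:(lra)) as [K HK].
  destruct (HK (th1 - rho/2 - alpha/2)) as [j [_ Hj]].
  set (th' := alpha / 2 + IZR j * alpha).
  assert (Hn : near th' (th1 - rho/2) (rho/2)).
  { unfold th'. replace (th1 - rho/2) with (alpha/2 + (th1 - rho/2 - alpha/2)) by ring.
    rewrite (Rplus_comm (alpha/2) (IZR j * alpha)), (Rplus_comm (alpha/2) (th1 - rho/2 - alpha/2)).
    apply near_add; auto. }
  destruct Hn as [K0 HK0]. apply Rabs_def2 in HK0.
  exists (r alpha th'). split; [apply X_r|]. split.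
  - intros n Hn. rewrite (A1 n Hn). unfold r.
    set (s := th1 - th' + IZR K0).
    assert (Hs : 0 < s < rho) by (unfold s; lra).
    replace (th' + IZR n * alpha) with ((th1 + IZR n * alpha - s) + IZR K0) by (unfold s; ring).
    rewrite frac_plus_int.
    replace (th1 + IZR n * alpha - s) with ((frac_part (th1 + IZR n * alpha) - s) + IZR (Int_part (th1 + IZR n * alpha))) by (unfold frac_part; ring).
    rewrite frac_plus_int. symmetry. apply (HP n); [lia| lra].
  - intros z Hz Hpz. apply functional_extensionality. intros n.
    rewrite pi_r in Hpz; auto.
    set (p := frac_part (th' + IZR n * alpha)).
    assert (Hpb : 0 <= p < 1) by apply frac_bounds.
    assert (HnB : notB p).
    { unfold p, th'. replace (alpha / 2 + IZR j * alpha + IZR n * alpha) with (alpha / 2 + IZR (j + n) * alpha) by (rewrite plus_IZR; ring).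
      apply orbit_notB; auto. }
    destruct (LC_both p Hpb HnB) as [rho2 [Hr2 HC]].
    unfold r. fold p.
    apply (coord alpha z n p (rho2 / 2)); auto; [lra| |].
    + rewrite Hpz. unfold p. apply near_frac_r. apply near_add. apply near_frac_l. apply near_refl. lra.
    + intros q Hq. replace (2 * (rho2 / 2)) with rho2 in Hq by field. apply HC; auto.
Qed.

Definition xsel (x0 x1 : config) (b : bool) : config := if b then x1 else x0.

Lemma list_bound (I : list Z) : exists B, forall k, In k I -> (Z.abs k <= B)%Z.
Proof.
  induction I as [|h t [B HB]].
  - exists 0%Z. intros k [].
  - exists (Z.max (Z.abs h) B). intros k [E|Hk]; [subst; lia|]. specialize (HB k Hk). lia.
Qed.

Lemma realize alpha (Hi : irrational alpha) x0 x1 Nw rho J :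
  Xs alpha x0 -> Xs alpha x1 -> rho > 0 ->
  (forall x y, Xs alpha x -> Xs alpha y -> agree Nw x y -> near (pi alpha x) (pi alpha y) rho) ->
  indep_set (Xs alpha) (fun y => agree Nw x0 y) (fun y => agree Nw x1 y) J ->
  forall I, (forall i, In i I -> J i) -> forall a : Z -> bool, exists th, forall k, In k I ->
    near (th + IZR k * alpha) (pi alpha (xsel x0 x1 (a k))) (2 * rho) /\
    forall m, (Z.abs m <= Nw)%Z -> r alpha th (k + m)%Z = xsel x0 x1 (a k) m.
Proof.
  intros H0 H1 Hr Hc Hind I HI a.
  destruct (Hind I HI a) as [y [Hy Hya]].
  destruct (list_bound I) as [B HB].
  destruct (pi_Cl alpha y Hy rho Hr (Nw + B)%Z) as [th [Nth Ath]].
  exists th. intros k Hk.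
  assert (Ak : agree Nw (xsel x0 x1 (a k)) (shiftn k y)).
  { specialize (Hya k Hk). unfold xsel. destruct (a k); auto. }
  assert (Hxs : Xs alpha (xsel x0 x1 (a k))) by (unfold xsel; destruct (a k); auto).
  split.
  - pose proof (Hc _ _ Hxs (X_shift alpha y k Hy) Ak) as Hn.
    rewrite pi_shift in Hn by auto.
    apply near_sym in Hn. rewrite near_frac_l in Hn.
    replace (2 * rho) with (rho + rho) by ring.
    apply (near_trans _ (pi alpha y + IZR k * alpha)); auto. apply near_add; auto.
  - intros m Hm. specialize (HB k Hk).
    rewrite <- (Ath (k + m)%Z) by lia. rewrite (Ak m Hm). unfold shiftn. f_equal; lia.
Qed.

Lemma near_dec a b e : near a b e -> exists d K, Rabs d < e /\ a = b + d + IZR K.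
Proof. intros [k Hk]. exists (a - b - IZR k), k. split; auto. ring. Qed.

Lemma int_small (k : Z) : Rabs (IZR k) < 1 -> k = 0%Z.
Proof.
  intros H. apply Rabs_def2 in H. destruct H.
  assert (-1 < k)%Z by (apply lt_IZR; simpl; lra).
  assert (k < 1)%Z by (apply lt_IZR; simpl; lra). lia.
Qed.

Lemma two_distinct (J : Z -> Prop) : infinite_set J -> exists i j, J i /\ J j /\ i <> j.
Proof.
  intros Hinf. apply NNPP. intros Hn. apply Hinf.
  destruct (classic (exists i, J i)) as [[i Hi]|Hno].
  - exists (i :: nil). intros k Hk. left. apply NNPP. intros Hne. apply Hn. exists i, k. auto.
  - exists nil. intros k Hk. exfalso; apply Hno; eauto.
Qed.

Lemma caseA alpha (Hi : irrational alpha) x0 x1 :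
  Xs alpha x0 -> Xs alpha x1 -> pi alpha x0 <> pi alpha x1 ->
  exists Nw, forall J, indep_set (Xs alpha) (fun y => agree Nw x0 y) (fun y => agree Nw x1 y) J ->
    ~ infinite_set J.
Proof.
  intros H0 H1 Hne.
  assert (Hex : exists e0, e0 > 0 /\ ~ near (pi alpha x0) (pi alpha x1) e0).
  { apply NNPP. intros Hn. apply Hne.
    assert (frac_part (pi alpha x0) = frac_part (pi alpha x1)).
    { apply near_all_eq. intros e He. apply NNPP. intros Hn'. apply Hn. exists e; auto. }
    rewrite !frac_id in H by apply pi_range. auto. }
  destruct Hex as [e0 [He0 Hn0]].
  set (rho := e0 / 8).
  destruct (pi_cont alpha Hi rho ltac:(unfold rho; lra)) as [Nw Hc].
  exists Nw. intros J Hind Hinf.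
  destruct (two_distinct J Hinf) as [i [j [Hi' [Hj' Hij]]]].
  assert (HI : forall k, In k (i :: j :: nil) -> J k) by (intros k [E|[E|[]]]; subst; auto).
  destruct (realize alpha Hi x0 x1 Nw rho J H0 H1 ltac:(unfold rho; lra) Hc Hind _ HI (fun _ => false)) as [th Hth].
  destruct (realize alpha Hi x0 x1 Nw rho J H0 H1 ltac:(unfold rho; lra) Hc Hind _ HI
              (fun k => if Z.eq_dec k j then true else false)) as [th' Hth'].
  destruct (Hth i ltac:(simpl; auto)) as [Ni _]. destruct (Hth j ltac:(simpl; auto)) as [Nj _].
  destruct (Hth' i ltac:(simpl; auto)) as [Ni' _]. destruct (Hth' j ltac:(simpl; auto)) as [Nj' _].
  simpl in Ni, Nj. unfold xsel in Ni', Nj'.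
  destruct (Z.eq_dec i j); [contradiction|]. destruct (Z.eq_dec j j); [|contradiction].
  pose proof (near_sub2 _ _ _ _ _ _ Nj Ni) as D1.
  pose proof (near_sub2 _ _ _ _ _ _ Nj' Ni') as D2.
  replace (th + IZR j * alpha - (th + IZR i * alpha)) with ((IZR j - IZR i) * alpha) in D1 by ring.
  replace (th' + IZR j * alpha - (th' + IZR i * alpha)) with ((IZR j - IZR i) * alpha) in D2 by ring.
  apply Hn0. apply near_sym in D1.
  pose proof (near_trans _ _ _ _ _ D1 D2) as D3.
  apply near_sym in D3.
  apply (near_mono _ _ (2 * rho + 2 * rho + (2 * rho + 2 * rho))); [unfold rho; lra|].
  destruct D3 as [k Hk]. exists (- k)%Z. rewrite opp_IZR.
  replace (pi alpha x0 - pi alpha x1 - - IZR k) with (- (pi alpha x1 - pi alpha x0 - (pi alpha x0 - pi alpha x0) - IZR k)) by ring.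
  rewrite Rabs_Ropp. auto.
Qed.

Lemma caseB1 alpha (Hi : irrational alpha) x0 x1 m :
  Xs alpha x0 -> Xs alpha x1 -> pi alpha x0 = pi alpha x1 -> x0 m <> x1 m ->
  frac_part (pi alpha x0 + IZR m * alpha) <> 0 ->
  exists Nw, forall J, indep_set (Xs alpha) (fun y => agree Nw x0 y) (fun y => agree Nw x1 y) J ->
    ~ infinite_set J.
Proof.
  intros H0 H1 Heq Hm Hp0.
  set (th0 := pi alpha x0) in *.
  set (p := frac_part (th0 + IZR m * alpha)) in *.
  assert (Hp : 0 < p < 1) by (pose proof (frac_bounds (th0 + IZR m * alpha)); fold p in H; lra).
  destruct (LC_left p ltac:(lra)) as [rL [HrL HL]].
  destruct (LC_right p Hp) as [rR [vR [HrR HR]]].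
  set (rho := Rmin (Rmin rL rR) (1/4) / 4).
  assert (Hrho : 0 < rho /\ 4 * rho <= rL /\ 4 * rho <= rR /\ rho <= 1/16).
  { unfold rho. pose proof (Rmin_l (Rmin rL rR) (1/4)). pose proof (Rmin_r (Rmin rL rR) (1/4)).
    pose proof (Rmin_l rL rR). pose proof (Rmin_r rL rR).
    assert (0 < Rmin (Rmin rL rR) (1/4)) by (apply Rmin_pos; [apply Rmin_pos|]; lra). lra. }
  destruct (pi_cont alpha Hi rho ltac:(lra)) as [Nc Hc].
  set (Nw := Z.max Nc (Z.abs m)).
  assert (Hc' : forall x y, Xs alpha x -> Xs alpha y -> agree Nw x y -> near (pi alpha x) (pi alpha y) rho).
  { intros x y Hx Hy A. apply Hc; auto. apply (agree_mono _ Nw); auto. unfold Nw; lia. }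
  exists Nw. intros J Hind Hinf.
  destruct (two_distinct J Hinf) as [i [j [Hi' [Hj' Hij]]]].
  assert (HI : forall k, In k (i :: j :: nil) -> J k) by (intros k [E|[E|[]]]; subst; auto).
  assert (Hval : forall th k, near (th + IZR k * alpha) th0 (2 * rho) ->
            exists d K, Rabs d < 2 * rho /\ th + IZR (k + m) * alpha = p + d + IZR K /\
              r alpha th (k + m)%Z = (if Rle_dec d 0 then Wb p else vR)).
  { intros th k Hn.
    assert (Hn2 : near (th + IZR (k + m) * alpha) p (2 * rho)).
    { unfold p. apply near_frac_r. rewrite plus_IZR.
      replace (th + (IZR k + IZR m) * alpha) with ((th + IZR k * alpha) + IZR m * alpha) by ring.
      apply near_add; auto. }
    destruct (near_dec _ _ _ Hn2) as [d [K [Hd Hdk]]].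
    exists d, K. split; auto. split; auto.
    unfold r. rewrite Hdk. rewrite frac_plus_int. apply Rabs_def2 in Hd.
    destruct (Rle_dec d 0).
    - apply HL. lra.
    - apply HR. lra. }
  destruct (realize alpha Hi x0 x1 Nw rho J H0 H1 ltac:(lra) Hc' Hind _ HI
              (fun k => if Z.eq_dec k j then true else false)) as [th Hth].
  destruct (realize alpha Hi x0 x1 Nw rho J H0 H1 ltac:(lra) Hc' Hind _ HI
              (fun k => if Z.eq_dec k i then true else false)) as [th' Hth'].
  destruct (Hth i ltac:(simpl; auto)) as [Ni Ci]. destruct (Hth j ltac:(simpl; auto)) as [Nj Cj].
  destruct (Hth' i ltac:(simpl; auto)) as [Ni' Ci']. destruct (Hth' j ltac:(simpl; auto)) as [Nj' Cj'].
  unfold xsel in *.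
  destruct (Z.eq_dec i j); [contradiction|]. destruct (Z.eq_dec j j); [|contradiction].
  destruct (Z.eq_dec i i); [|contradiction]. destruct (Z.eq_dec j i); [lia|].
  fold th0 in Ni, Nj, Ni', Nj'. rewrite <- Heq in Nj, Ni'. fold th0 in Nj, Ni'.
  specialize (Ci m ltac:(unfold Nw; lia)). specialize (Cj m ltac:(unfold Nw; lia)).
  specialize (Ci' m ltac:(unfold Nw; lia)). specialize (Cj' m ltac:(unfold Nw; lia)).
  destruct (Hval th i Ni) as [di [Ki [Hdi [Ei Vi]]]].
  destruct (Hval th j Nj) as [dj [Kj [Hdj [Ej Vj]]]].
  destruct (Hval th' i Ni') as [di' [Ki' [Hdi' [Ei' Vi']]]].
  destruct (Hval th' j Nj') as [dj' [Kj' [Hdj' [Ej' Vj']]]].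
  assert (HD : dj - di = dj' - di').
  { assert (E : IZR (Kj - Ki - (Kj' - Ki')) = (dj' - di') - (dj - di)).
    { rewrite !minus_IZR. rewrite !plus_IZR in *. nra. }
    assert (Rabs (IZR (Kj - Ki - (Kj' - Ki'))) < 1).
    { rewrite E. apply Rabs_def2 in Hdi. apply Rabs_def2 in Hdj. apply Rabs_def2 in Hdi'. apply Rabs_def2 in Hdj'.
      apply Rabs_def1; lra. }
    apply int_small in H. rewrite H in E. simpl in E. lra. }
  rewrite Ci in Vi. rewrite Cj in Vj. rewrite Ci' in Vi'. rewrite Cj' in Vj'.
  destruct (Rle_dec di 0); destruct (Rle_dec dj 0); destruct (Rle_dec di' 0); destruct (Rle_dec dj' 0);
    try (apply Hm; congruence); lra.
Qed.

Lemma Int_part_mono x y : x <= y -> (Int_part x <= Int_part y)%Z.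
Proof.
  intros H. destruct (base_Int_part x) as [A1 A2]. destruct (base_Int_part y) as [B1 B2].
  assert (IZR (Int_part x) < IZR (Int_part y) + 1) by lra.
  rewrite <- plus_IZR in H0. apply lt_IZR in H0. lia.
Qed.

Lemma counting (Q : nat -> R) (sg lo : R) (K : nat) : lo > 0 -> (sg = 1 \/ sg = -1) ->
  (forall j, (j < K)%nat -> lo < Q j <= 1/8) ->
  (forall j, (S j < K)%nat -> sg * (Q (S j) - Q j) < 0) ->
  (forall j, (S j < K)%nat -> Z.even (Int_part (/ Q (S j))) <> Z.even (Int_part (/ Q j))) ->
  INR K - 1 <= / lo.
Proof.
  intros Hlo Hsg HB HM HP.
  set (f := fun j => IZR (Int_part (/ Q j))).
  assert (Hf : forall j, (j < K)%nat -> 8 <= f j < / lo).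
  { intros j Hj. specialize (HB j Hj). unfold f. split.
    - apply IZR_le. apply Int_inv_ge8. lra.
    - destruct (base_Int_part (/ Q j)). assert (/ Q j < / lo) by (apply Rinv_lt_contravar; nra). lra. }
  assert (Hstep : forall j, (S j < K)%nat -> sg * f (S j) >= sg * f j + 1).
  { intros j Hj. specialize (HM j Hj). specialize (HP j Hj).
    pose proof (HB j ltac:(lia)). pose proof (HB (S j) Hj).
    assert (Hne : Int_part (/ Q (S j)) <> Int_part (/ Q j)) by (intros E; apply HP; rewrite E; auto).
    unfold f. destruct Hsg as [E|E]; subst sg.
    - assert (Q (S j) < Q j) by lra.
      assert (/ Q j <= / Q (S j)) by (apply Rinv_le_contravar; lra).
      apply Int_part_mono in H2.
      assert (Int_part (/ Q j) + 1 <= Int_part (/ Q (S j)))%Z by lia.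
      apply IZR_le in H3. rewrite plus_IZR in H3. simpl in H3. lra.
    - assert (Q j < Q (S j)) by lra.
      assert (/ Q (S j) <= / Q j) by (apply Rinv_le_contravar; lra).
      apply Int_part_mono in H2.
      assert (Int_part (/ Q (S j)) + 1 <= Int_part (/ Q j))%Z by lia.
      apply IZR_le in H3. rewrite plus_IZR in H3. simpl in H3. lra. }
  assert (Hind : forall j, (j < K)%nat -> sg * f j >= sg * f 0%nat + INR j).
  { induction j as [|j IH]; intros Hj.
    - simpl. lra.
    - specialize (IH ltac:(lia)). specialize (Hstep j Hj). rewrite S_INR. lra. }
  destruct K as [|K].
  - simpl. pose proof (Rinv_0_lt_compat lo Hlo). lra.
  - specialize (Hind K ltac:(lia)). pose proof (Hf K ltac:(lia)). pose proof (Hf 0%nat ltac:(lia)).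
    rewrite S_INR.
    destruct Hsg as [E|E]; subst sg; lra.
Qed.

Fixpoint Lseq (nx : list Z -> Z) (n : nat) : list Z :=
  match n with O => nil | S n' => nx (Lseq nx n') :: Lseq nx n' end.

Fixpoint chain (F : R -> Z) (h : Z -> R) (s : R) (j : nat) : Z :=
  match j with O => F s | S j' => F (h (chain F h s j')) end.

Lemma inj_seq (J : Z -> Prop) : infinite_set J ->
  exists s : nat -> Z, (forall n, J (s n)) /\ (forall n n', s n = s n' -> n = n').
Proof.
  intros Hinf.
  assert (Hnext : forall l : list Z, exists k, J k /\ ~ In k l).
  { intros l. apply NNPP. intros Hn. apply Hinf. exists l. intros i Hi.
    apply NNPP. intros Hni. apply Hn. exists i; auto. }
  set (nx := fun l => proj1_sig (constructive_indefinite_description _ (Hnext l))).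
  assert (Hnx : forall l, J (nx l) /\ ~ In (nx l) l).
  { intros l. unfold nx. destruct (constructive_indefinite_description _ (Hnext l)); auto. }
  exists (fun n => nx (Lseq nx n)). split; [intros; apply Hnx|].
  assert (Hin : forall n j, (j < n)%nat -> In (nx (Lseq nx j)) (Lseq nx n)).
  { induction n as [|n IH]; intros j Hj; [lia|]. simpl.
    destruct (Nat.eq_dec j n) as [->|Hne]; [left; auto|right; apply IH; lia]. }
  intros n n' E. destruct (Nat.lt_total n n') as [H|[H|H]]; auto.
  - exfalso. apply (proj2 (Hnx (Lseq nx n'))). rewrite <- E. apply Hin; auto.
  - exfalso. apply (proj2 (Hnx (Lseq nx n))). rewrite E. apply Hin; auto.
Qed.

Lemma rat_inv (c : Z) : exists u v : Z, v <> 0%Z /\ / IZR c = IZR u / IZR v.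
Proof.
  destruct (Z.eq_dec c 0) as [->|Hc].
  - exists 0%Z, 1%Z. split; [lia|]. simpl. rewrite Rinv_0. field.
  - exists 1%Z, c. split; auto. simpl. field. apply not_0_IZR; auto.
Qed.

Lemma core (e : Z -> R) (J : Z -> Prop) (c : bool -> bool) :
  c true <> c false ->
  (forall k l, J k -> J l -> e k = e l -> k = l) ->
  (forall k l c1 c2, J k -> J l -> e k - e l = / IZR c1 - / IZR c2 -> k = l) ->
  (forall k, J k -> 0 <= e k <= 1) ->
  infinite_set J ->
  (forall I, (forall k, In k I -> J k) -> (forall k l, In k I -> In l I -> Rabs (e k - e l) < 1/4) ->
     forall a : Z -> bool, exists t, forall k, In k I ->
       -(1/32) < t + e k < 1/32 /\ Wb (frac_part (t + e k)) = c (a k)) ->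
  False.
Proof.
  intros Hc Hinj Hrat Hbd Hinf Hind.
  destruct (inj_seq J Hinf) as [s [HsJ Hsinj]].
  set (u := fun n => e (s n)).
  destruct (Bolzano_Weierstrass u (fun y => 0 <= y <= 1) (compact_P3 0 1)) as [es Hes].
  { intros n; unfold u; apply Hbd; auto. }
  assert (Hclu : forall eta, eta > 0 -> exists k, J k /\ 0 < Rabs (e k - es) < eta).
  { intros eta Heta.
    assert (HN : exists N, forall n, (N <= n)%nat -> u n <> es).
    { destruct (classic (exists n0, u n0 = es)) as [[n0 Hn0]|Hno].
      - exists (S n0). intros n Hn E. unfold u in *. rewrite <- Hn0 in E.
        apply Hinj in E; auto. apply Hsinj in E. lia.
      - exists 0%nat. intros n _ E. apply Hno; eauto. }
    destruct HN as [N HN].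
    destruct (Hes (fun y => Rabs (y - es) < eta) N) as [p [Hp Vp]].
    { exists (mkposreal eta Heta). intros y Hy. unfold disc in Hy. auto. }
    exists (s p). split; auto. split; auto.
    apply Rabs_pos_lt. specialize (HN p Hp). unfold u in HN. lra. }
  assert (Hside : exists sg, (sg = 1 \/ sg = -1) /\
            forall eta, eta > 0 -> exists k, J k /\ 0 < sg * (e k - es) < eta).
  { destruct (classic (forall eta, eta > 0 -> exists k, J k /\ 0 < 1 * (e k - es) < eta)) as [HA|HA].
    - exists 1; split; auto.
    - exists (-1); split; auto. apply not_all_ex_not in HA. destruct HA as [eta0 HA].
      apply imply_to_and in HA. destruct HA as [He0 HA].
      intros eta Heta. destruct (Hclu (Rmin eta eta0) ltac:(apply Rmin_pos; lra)) as [k [Hk Hk2]].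
      pose proof (Rmin_l eta eta0). pose proof (Rmin_r eta eta0).
      exists k. split; auto.
      destruct (Rle_dec (e k) es) as [Hle|Hle].
      + rewrite Rabs_left1 in Hk2 by lra. lra.
      + exfalso. apply HA. exists k. split; auto. rewrite Rabs_pos_eq in Hk2 by lra. lra. }
  destruct Hside as [sg [Hsg Hside]].
  assert (Hsg2 : sg * sg = 1) by (destruct Hsg; subst; lra).
  assert (Hk1 : exists k1 rc v1, J k1 /\ 0 < Rabs (e k1 - es) < 1/128 /\ rc > 0 /\
            forall q, Rabs (q - (e k1 - es)) < rc -> Wb (frac_part q) = v1).
  { assert (Hpos : forall d, 0 < d < 1/128 -> (forall c0, d <> / IZR c0) ->
              exists rc v1, rc > 0 /\ forall q, Rabs (q - d) < rc -> Wb (frac_part q) = v1).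
    { intros d Hd Hnc. destruct (LC_both d ltac:(lra)) as [rc [Hrc HC]].
      { split; [lra|split; [lra|auto]]. }
      exists rc, (Wb d). split; auto. }
    destruct Hsg as [E|E]; subst sg.
    - destruct (Hside (1/128) ltac:(lra)) as [k [Hk Hk2]].
      destruct (classic (exists c0, e k - es = / IZR c0)) as [[c0 Hc0]|Hno].
      + destruct (Hside (1 * (e k - es)) ltac:(lra)) as [k' [Hk' Hk2']].
        destruct (Hpos (e k' - es)) as [rc [v1 [Hrc HC]]]; [lra| |].
        { intros c1 Hc1. assert (k = k').
          { apply (Hrat k k' c0 c1); auto. replace (e k - e k') with ((e k - es) - (e k' - es)) by ring.
            rewrite Hc0, Hc1. auto. }
          subst k'. lra. }
        exists k', rc, v1. split; auto. split; [rewrite Rabs_pos_eq; lra|]. auto.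
      + destruct (Hpos (e k - es)) as [rc [v1 [Hrc HC]]]; [lra| |].
        { intros c1 Hc1. apply Hno. eauto. }
        exists k, rc, v1. split; auto. split; [rewrite Rabs_pos_eq; lra|]. auto.
    - destruct (Hside (1/128) ltac:(lra)) as [k [Hk Hk2]].
      exists k, (- (e k - es) / 2), true. split; auto. split; [rewrite Rabs_left; lra|].
      split; [lra|]. intros q Hq. apply Rabs_def2 in Hq. apply W_neg. lra. }
  destruct Hk1 as [k1 [rc [v1 [Hk1J [Hd1 [Hrc HC1]]]]]].
  set (d1 := e k1 - es) in *.
  set (rho1 := Rmin rc (Rabs d1) / 2).
  assert (Hr1 : 0 < rho1 /\ rho1 <= rc / 2 /\ rho1 <= Rabs d1 / 2).
  { unfold rho1. pose proof (Rmin_l rc (Rabs d1)). pose proof (Rmin_r rc (Rabs d1)).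
    assert (0 < Rmin rc (Rabs d1)) by (apply Rmin_pos; lra). lra. }
  set (hf := fun k => sg * (e k - es)).
  assert (Fex : forall eta, exists k, 0 < eta -> J k /\ 0 < hf k < eta).
  { intros eta. destruct (Rlt_dec 0 eta) as [H|H].
    - destruct (Hside eta H) as [k Hk]. exists k. intros _. auto.
    - exists 0%Z. intros; lra. }
  set (F := fun eta => proj1_sig (constructive_indefinite_description _ (Fex eta))).
  assert (HF : forall eta, 0 < eta -> J (F eta) /\ 0 < hf (F eta) < eta).
  { intros eta H. unfold F. destruct (constructive_indefinite_description _ (Fex eta)); simpl; auto. }
  set (g := chain F hf (rho1 / 2)).
  assert (Hg : forall j, J (g j) /\ 0 < hf (g j) < rho1 / 2).
  { induction j as [|j IH].
    - apply HF. lra.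
    - change (g (S j)) with (F (hf (g j))). destruct IH as [_ IH].
      destruct (HF (hf (g j))) as [A B]; [lra|]. split; auto; lra. }
  assert (Hdec : forall j, hf (g (S j)) < hf (g j)).
  { intros j. change (g (S j)) with (F (hf (g j))). destruct (Hg j) as [_ IH]. apply (HF (hf (g j))). lra. }
  assert (Hmono : forall j j', (j < j')%nat -> hf (g j') < hf (g j)).
  { intros j j' H. induction j' as [|j' IH]; [lia|].
    destruct (Nat.eq_dec j j') as [->|Hne]; [apply Hdec|]. specialize (IH ltac:(lia)).
    pose proof (Hdec j'). lra. }
  assert (Hginj : forall j j', g j = g j' -> j = j').
  { intros j j' E. destruct (Nat.lt_total j j') as [H|[H|H]]; auto.
    - apply Hmono in H. rewrite E in H. lra.
    - apply Hmono in H. rewrite E in H. lra. }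
  assert (Habs : forall k, Rabs (e k - es) = Rabs (hf k)).
  { intros k. unfold hf. rewrite Rabs_mult. destruct Hsg as [E|E]; subst sg;
      [rewrite Rabs_R1| rewrite (Rabs_left (-1)) by lra]; ring. }
  assert (Heg : forall j, e (g j) = es + sg * hf (g j)).
  { intros j. unfold hf. replace (sg * (sg * (e (g j) - es))) with ((sg * sg) * (e (g j) - es)) by ring.
    rewrite Hsg2. ring. }
  assert (Hgk1 : forall j, g j <> k1).
  { intros j E. destruct (Hg j) as [_ Hh].
    assert (H : Rabs (e (g j) - es) = hf (g j)) by (rewrite Habs; apply Rabs_pos_eq; lra).
    set (h0 := hf (g j)) in *. clearbody h0. rewrite E in H. fold d1 in H. lra. }
  assert (Hb1 : exists b1, c b1 = negb v1).
  { destruct (Bool.bool_dec (c true) (negb v1)) as [E|E]; [exists true; auto|].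
    exists false. destruct (c true), (c false), v1; simpl in *; congruence. }
  destruct Hb1 as [b1 Hb1].
  set (a := fun k => if Z.eq_dec k k1 then b1 else
                     if excluded_middle_informative (exists j, g j = k /\ Nat.even j = true) then true else false).
  assert (Hag : forall j, a (g j) = Nat.even j).
  { intros j. unfold a. destruct (Z.eq_dec (g j) k1) as [E|_]; [exfalso; apply (Hgk1 j E)|].
    destruct excluded_middle_informative as [[j' [E1 E2]]|Hn].
    - apply Hginj in E1. subst; auto.
    - destruct (Nat.even j) eqn:Ej; auto. exfalso; apply Hn; eauto. }
  assert (Hak1 : a k1 = b1) by (unfold a; destruct (Z.eq_dec k1 k1); [auto|contradiction]).
  set (K := (Z.to_nat (up (/ (rho1 / 2))) + 2)%nat).
  set (I := k1 :: map g (seq 0 K)).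
  assert (HgI : forall j, (j < K)%nat -> In (g j) I).
  { intros j Hj. right. apply in_map. apply in_seq. lia. }
  assert (HIe : forall k, In k I -> J k /\ Rabs (e k - es) < 1/128).
  { intros k [E|Hk].
    - subst k. split; auto. fold d1; lra.
    - apply in_map_iff in Hk. destruct Hk as [j [E _]]. subst k.
      destruct (Hg j) as [HJ Hh]. split; auto. rewrite Habs. rewrite Rabs_pos_eq; lra. }
  destruct (Hind I) with (a := a) as [t Ht].
  { intros k Hk; apply HIe; auto. }
  { intros k l Hk Hl. destruct (HIe k Hk) as [_ A]. destruct (HIe l Hl) as [_ B].
    replace (e k - e l) with ((e k - es) - (e l - es)) by ring.
    apply Rabs_def2 in A. apply Rabs_def2 in B. apply Rabs_def1; lra. }
  set (z := t + es).
  assert (Hq : forall j, (j < K)%nat -> t + e (g j) = z + sg * hf (g j) /\ Rabs (sg * hf (g j)) < rho1 / 2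
             /\ -(1/32) < t + e (g j) < 1/32 /\ Wb (frac_part (t + e (g j))) = c (Nat.even j)).
  { intros j Hj. destruct (Ht (g j) (HgI j Hj)) as [T1 T2]. rewrite Hag in T2.
    split; [rewrite Heg; unfold z; ring|]. split; [|auto].
    assert (Hs1 : Rabs sg = 1) by (destruct Hsg as [E|E]; subst sg; [apply Rabs_R1| rewrite Rabs_left; lra]).
    rewrite Rabs_mult, Hs1. destruct (Hg j) as [_ Hh]. rewrite Rabs_pos_eq; lra. }
  destruct (Rle_dec z (- (rho1 / 2))) as [Hz1|Hz1].
  { destruct (Hq 0%nat ltac:(unfold K; lia)) as [Q1 [Q2 [Q3 Q4]]].
    destruct (Hq 1%nat ltac:(unfold K; lia)) as [R1 [R2 [R3 R4]]].
    apply Rabs_def2 in Q2. apply Rabs_def2 in R2.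
    rewrite W_neg in Q4 by lra. rewrite W_neg in R4 by lra. simpl in Q4, R4. apply Hc. congruence. }
  destruct (Rle_dec rho1 z) as [Hz2|Hz2].
  { assert (INR K - 1 <= / (rho1 / 2)).
    { apply (counting (fun j => t + e (g j)) sg (rho1/2) K); auto; [lra| | |].
      - intros j Hj. destruct (Hq j Hj) as [Q1 [Q2 [Q3 Q4]]]. apply Rabs_def2 in Q2. lra.
      - intros j Hj. rewrite !Heg. replace (sg * (t + (es + sg * hf (g (S j))) - (t + (es + sg * hf (g j)))))
          with ((sg * sg) * (hf (g (S j)) - hf (g j))) by ring. rewrite Hsg2. pose proof (Hdec j). lra.
      - intros j Hj. destruct (Hq j ltac:(lia)) as [Q1 [Q2 [Q3 Q4]]].
        destruct (Hq (S j) Hj) as [R1 [R2 [R3 R4]]]. apply Rabs_def2 in Q2. apply Rabs_def2 in R2.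
        rewrite W_small in Q4, R4 by lra. rewrite Q4, R4. rewrite Nat.even_succ, <- Nat.negb_even.
        destruct (Nat.even j); simpl; auto. }
    unfold K in H. rewrite plus_INR, INR_IZR_INZ, Z2Nat.id in H.
    - destruct (archimed (/ (rho1 / 2))). simpl in H. lra.
    - destruct (archimed (/ (rho1 / 2))). assert (0 < / (rho1 / 2)) by (apply Rinv_0_lt_compat; lra).
      assert (0 < IZR (up (/ (rho1 / 2)))) by lra. apply lt_IZR in H3. lia. }
  destruct (Ht k1 ltac:(left; auto)) as [T1 T2]. rewrite Hak1, Hb1 in T2.
  rewrite (HC1 (t + e k1)) in T2.
  - destruct v1; discriminate.
  - replace (t + e k1 - d1) with z by (unfold z, d1; ring). apply Rabs_def1; lra.
Qed.

Lemma caseB2 alpha (Hi : irrational alpha) x0 x1 m :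
  Xs alpha x0 -> Xs alpha x1 -> pi alpha x0 = pi alpha x1 -> x0 m <> x1 m ->
  frac_part (pi alpha x0 + IZR m * alpha) = 0 ->
  exists Nw, forall J, indep_set (Xs alpha) (fun y => agree Nw x0 y) (fun y => agree Nw x1 y) J ->
    ~ infinite_set J.
Proof.
  intros H0 H1 Heq Hm Hp0.
  set (th0 := pi alpha x0) in *.
  set (rho := 1/64).
  destruct (pi_cont alpha Hi rho ltac:(unfold rho; lra)) as [Nc Hc].
  set (Nw := Z.max Nc (Z.abs m)).
  assert (Hc' : forall x y, Xs alpha x -> Xs alpha y -> agree Nw x y -> near (pi alpha x) (pi alpha y) rho).
  { intros x y Hx Hy A. apply Hc; auto. apply (agree_mono _ Nw); auto. unfold Nw; lia. }
  exists Nw. intros J Hind Hinf.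
  set (e := fun k => frac_part (IZR (k + m) * alpha)).
  apply (core e J (fun b => xsel x0 x1 b m)).
  - simpl. auto.
  - intros k l _ _ E. unfold e in E. destruct (frac_eq_int _ _ E) as [K HK].
    assert (IZR (k - l) * alpha = IZR K) by (rewrite minus_IZR; rewrite !plus_IZR in HK; lra).
    apply irr_int in H; auto. lia.
  - intros k l c1 c2 _ _ E.
    destruct (rat_inv c1) as [u1 [v1 [Hv1 E1]]]. destruct (rat_inv c2) as [u2 [v2 [Hv2 E2]]].
    assert (Hv1' : IZR v1 <> 0) by (apply not_0_IZR; auto).
    assert (Hv2' : IZR v2 <> 0) by (apply not_0_IZR; auto).
    unfold e in E. pose proof (frac_decomp (IZR (k + m) * alpha)) as D1.
    pose proof (frac_decomp (IZR (l + m) * alpha)) as D2.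
    assert (IZR (k - l) * alpha = IZR (u1 * v2 - u2 * v1) / IZR (v1 * v2) +
              IZR (Int_part (IZR (k + m) * alpha) - Int_part (IZR (l + m) * alpha))).
    { assert (HAB : IZR (k - l) * alpha = IZR (k+m) * alpha - IZR (l+m) * alpha)
        by (rewrite !minus_IZR, !plus_IZR; ring).
      rewrite HAB.
      assert (HF : IZR (u1 * v2 - u2 * v1) / IZR (v1 * v2) = / IZR c1 - / IZR c2)
        by (rewrite minus_IZR, !mult_IZR, E1, E2; field; auto).
      rewrite HF, minus_IZR. rewrite <- E. lra. }
    apply irr_rat in H; auto; [lia|]. lia.
  - intros k _. unfold e. pose proof (frac_bounds (IZR (k + m) * alpha)). lra.
  - auto.
  - intros I HI Hclose a.
    destruct I as [|k0 I'].
    { exists 0. intros k []. }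
    destruct (realize alpha Hi x0 x1 Nw rho J H0 H1 ltac:(unfold rho; lra) Hc' Hind _ HI a) as [th Hth].
    assert (Hpt : forall k, In k (k0 :: I') -> exists K, Rabs (th + e k - IZR K) < 2 * rho /\
               r alpha th (k + m)%Z = xsel x0 x1 (a k) m /\
               Wb (frac_part (th + e k)) = r alpha th (k + m)%Z).
    { intros k Hk. destruct (Hth k Hk) as [Nk Ck].
      assert (Hpk : pi alpha (xsel x0 x1 (a k)) = th0) by (unfold xsel; destruct (a k); auto).
      rewrite Hpk in Nk.
      assert (Nk2 : near (th + IZR (k + m) * alpha) 0 (2 * rho)).
      { rewrite <- Hp0. apply near_frac_r. rewrite plus_IZR.
        replace (th + (IZR k + IZR m) * alpha) with ((th + IZR k * alpha) + IZR m * alpha) by ring.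
        apply near_add; auto. }
      destruct Nk2 as [K HK]. exists (K - Int_part (IZR (k + m) * alpha))%Z. split; [|split].
      - rewrite minus_IZR. unfold e, frac_part.
        replace (th + (IZR (k + m) * alpha - IZR (Int_part (IZR (k + m) * alpha))) -
                 (IZR K - IZR (Int_part (IZR (k + m) * alpha)))) with (th + IZR (k + m) * alpha - 0 - IZR K) by ring.
        auto.
      - apply Ck. unfold Nw; lia.
      - unfold r, e. rewrite (frac_decomp (IZR (k + m) * alpha)) at 2.
        replace (th + (IZR (Int_part (IZR (k + m) * alpha)) + frac_part (IZR (k + m) * alpha)))
          with ((th + frac_part (IZR (k + m) * alpha)) + IZR (Int_part (IZR (k + m) * alpha))) by ring.
        rewrite frac_plus_int. auto. }
    destruct (Hpt k0 ltac:(left; auto)) as [K0 [HK0 _]].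
    exists (th - IZR K0). intros k Hk.
    destruct (Hpt k Hk) as [Kk [HKk [Ck Wk]]].
    assert (Kk = K0).
    { specialize (Hclose k k0 Hk ltac:(left; auto)).
      apply Rabs_def2 in HK0. apply Rabs_def2 in HKk. apply Rabs_def2 in Hclose.
      assert (Rabs (IZR (Kk - K0)) < 1) by (rewrite minus_IZR; apply Rabs_def1; unfold rho in *; lra).
      apply int_small in H. lia. }
    subst Kk. split.
    + apply Rabs_def2 in HKk. unfold rho in HKk. lra.
    + replace (th - IZR K0 + e k) with ((th + e k) + IZR (- K0)) by (rewrite opp_IZR; ring).
      rewrite frac_plus_int. rewrite Wk, Ck. auto.
Qed.

Lemma cell_lemma A lam (b : bool) : A > 0 -> lam > 0 -> A + lam <= 1/8 -> lam >= 3 * (A + lam)^2 ->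
  exists Q lam1, A <= Q /\ Q + lam1 <= A + lam /\ lam1 >= A^2 / 2 /\ lam1 > 0 /\
    forall q, Q <= q <= Q + lam1 -> 0 < q <= 1/8 /\ Z.even (Int_part (/ q)) = b.
Proof.
  intros HA Hl H8 Hq.
  set (c0 := Int_part (/ (A + lam))).
  assert (Hc0 : (8 <= c0)%Z) by (apply Int_inv_ge8; lra).
  destruct (base_Int_part (/ (A + lam))) as [B1 B2]. fold c0 in B1, B2.
  set (c := if Bool.eqb (Z.even (c0 + 1)) b then (c0 + 1)%Z else (c0 + 2)%Z).
  assert (Hcb : Z.even c = b).
  { unfold c. destruct (Bool.eqb (Z.even (c0 + 1)) b) eqn:E.
    - apply Bool.eqb_prop in E; auto.
    - replace (c0 + 2)%Z with (Z.succ (c0 + 1)) by lia. rewrite Z.even_succ, <- Z.negb_even.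
      destruct (Z.even (c0 + 1)), b; simpl in *; congruence. }
  assert (Hcr : (c0 + 1 <= c <= c0 + 2)%Z) by (unfold c; destruct Bool.eqb; lia).
  set (C := IZR c).
  assert (HC : IZR c0 + 1 <= C <= IZR c0 + 2).
  { unfold C. destruct Hcr as [X Y]. apply IZR_le in X. apply IZR_le in Y. rewrite plus_IZR in X, Y. simpl in X, Y. lra. }
  assert (HC8 : 9 <= C) by (apply IZR_le in Hc0; simpl in Hc0; lra).
  assert (F1 : 1 < C * (A + lam)).
  { assert (/ (A + lam) < C) by lra.
    apply (Rmult_lt_compat_r (A + lam)) in H; [|lra]. rewrite Rinv_l in H; lra. }
  assert (F2 : A * (C + 1) <= 1).
  { assert (/ (A + lam) * (A + lam) = 1) by (field; lra).
    assert (IZR c0 * (A + lam) <= / (A + lam) * (A + lam)) by (apply Rmult_le_compat_r; lra).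
    rewrite H in H0.
    assert (A * (IZR c0 + 3) <= 1).
    { assert (G1 : 3 * A * (A + lam) <= lam) by nra.
      assert (G2 : IZR c0 * A * (A + lam) <= A) by nra.
      assert (G3 : A * (IZR c0 + 3) * (A + lam) <= 1 * (A + lam)) by nra.
      apply Rmult_le_reg_r in G3; lra. }
    nra. }
  set (w := / C - / (C + 1)).
  assert (Hw : w = / (C * (C + 1))) by (unfold w; field; lra).
  assert (Hwpos : w > 0) by (rewrite Hw; apply Rinv_0_lt_compat; nra).
  exists (/ (C + 1) + w / 4), (w / 2).
  assert (HinvC1 : A <= / (C + 1)).
  { apply (Rmult_le_reg_r (C + 1)); [lra|]. rewrite Rinv_l by lra. lra. }
  assert (HinvC : / C < A + lam).
  { apply (Rmult_lt_reg_r C); [lra|]. rewrite Rinv_l by lra. lra. }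
  split; [lra|]. split; [unfold w in *; lra|]. split; [|split; [lra|]].
  - assert (A ^ 2 <= w).
    { rewrite Hw. assert (A * C <= 1) by nra.
      assert (0 <= (1 - A * (C + 1)) * (A * C)) by (apply Rmult_le_pos; nra).
      assert (A ^ 2 * (C * (C + 1)) <= 1) by nra.
      apply (Rmult_le_reg_r (C * (C + 1))); [nra|]. rewrite Rinv_l by nra. lra. }
    lra.
  - intros q Hq'. assert (HC1 : 0 < / (C + 1)) by (apply Rinv_0_lt_compat; lra).
    assert (/ C <= / 9) by (apply Rinv_le_contravar; lra).
    split; [unfold w in *; split; lra|].
    rewrite <- Hcb. f_equal. apply cell_value; [lia|]. unfold C in *. unfold w in *. lra.
Qed.

Fixpoint chainP (E : R) (L : list (R * bool)) : Prop :=
  match L with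
  | nil => True
  | (e, b) :: L' => 200 * E^2 <= e <= E /\
      (match L' with nil => True | (e', _) :: _ => e' <= e / 16 end) /\ chainP E L'
  end.

Lemma sweep_aux E : 0 < E <= 1/100 -> forall L T lam, 0 <= T -> lam > 0 -> T + lam <= 12 * E^2 ->
  chainP E L -> (match L with nil => True | (e, _) :: _ => lam >= 3 * (T + e + lam)^2 end) ->
  exists t, T <= t <= T + lam /\ forall e b, In (e, b) L -> 0 < t + e <= 1/8 /\ Z.even (Int_part (/ (t + e))) = b.
Proof.
  intros HE L. induction L as [|[e b] L' IH]; intros T lam HT Hl HTl HC Hh.
  - exists T. split; [lra|]. intros e b [].
  - simpl in HC. destruct HC as [He [Hnext HC']].
    assert (HE2 : 0 < E^2) by nra.
    assert (HE2' : E^2 <= E / 100) by nra.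
    destruct (cell_lemma (T + e) lam b) as [Q [lam1 [Q1 [Q2 [Q3 [Q4 Q5]]]]]]; try lra.
    assert (He2 : e^2 <= (T + e)^2) by nra.
    assert (He2' : e ^ 2 <= e / 100) by nra.
    destruct (IH (Q - e) (e^2/2)) as [t [Ht1 Ht2]].
    + lra.
    + nra.
    + lra.
    + auto.
    + destruct L' as [|[e' b'] L'']; auto.
      simpl in HC'. destruct HC' as [He' _].
      assert (P1 : Q - e + e' + e^2/2 <= e / 7) by lra.
      assert (P0 : 0 <= Q - e + e' + e^2/2) by nra.
      nra.
    + exists t. split; [lra|]. intros e0 b0 [E0|I0].
      * inversion E0; subst e0 b0. apply Q5. lra.
      * apply Ht2; auto.
Qed.

Lemma sweep E L : 0 < E <= 1/100 -> chainP E L ->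
  exists t, 0 <= t <= 12 * E^2 /\ forall e b, In (e, b) L -> 0 < t + e <= 1/8 /\ Z.even (Int_part (/ (t + e))) = b.
Proof.
  intros HE HC.
  assert (HE2 : 0 < E^2) by nra.
  destruct (sweep_aux E HE L 0 (12 * E^2)) as [t [Ht1 Ht2]]; try lra; auto.
  - destruct L as [|[e b] L']; auto. simpl in HC. destruct HC as [He _].
    assert (HE2' : E^2 <= E / 100) by nra.
    assert (0 + e + 12 * E^2 <= 1.12 * E) by lra. nra.
  - exists t. split; [lra|auto].
Qed.

Fixpoint chainZ (e : Z -> R) (l : list Z) : Prop :=
  match l with
  | nil => True
  | k :: l' => (match l' with nil => True | k' :: _ => e k' <= e k / 16 end) /\ chainZ e l'
  end.

Lemma chainZ_tail e k l : (forall x, In x (k :: l) -> e x > 0) -> chainZ e (k :: l) ->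
  forall x, In x l -> e x <= e k / 16.
Proof.
  revert k. induction l as [|k' l' IH]; intros k Hpos HC x Hx; [destruct Hx|].
  simpl in HC. destruct HC as [H1 HC].
  destruct Hx as [->|Hx]; auto.
  assert (e x <= e k' / 16).
  { apply (IH k'); auto. intros y Hy. apply Hpos. right; auto. }
  assert (e k' > 0) by (apply Hpos; right; left; auto).
  assert (e x > 0) by (apply Hpos; right; right; auto). lra.
Qed.

Lemma chainZ_nodup e l : (forall x, In x l -> e x > 0) -> chainZ e l -> NoDup l.
Proof.
  induction l as [|k l IH]; intros Hpos HC; constructor.
  - intros Hin. pose proof (chainZ_tail e k l Hpos HC k Hin).
    assert (e k > 0) by (apply Hpos; left; auto). lra.
  - apply IH; [intros; apply Hpos; right; auto| destruct HC; auto].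
Qed.

Lemma build alpha (Hi : irrational alpha) : forall n U, 0 < U < 1/2 ->
  exists l, length l = n /\ chainZ (fun k => frac_part (IZR k * alpha)) l /\
    forall k, In k l -> U / 64^n <= frac_part (IZR k * alpha) <= U.
Proof.
  induction n as [|n IH]; intros U HU.
  - exists nil. simpl. split; auto. split; auto. intros k [].
  - destruct (uniform_density alpha Hi (U/4) ltac:(lra)) as [N HN].
    destruct (HN (3 * U / 4)) as [i [_ Hi']].
    apply near_interval in Hi'; [|lra|lra].
    set (ei := frac_part (IZR i * alpha)) in *.
    destruct (IH (ei / 32) ltac:(lra)) as [l [Hlen [Hch Hb]]].
    assert (H64 : 1 <= 64 ^ n) by (apply pow_R1_Rle; lra).
    exists (i :: l). split; [simpl; auto|]. split.
    + simpl. split; auto. destruct l as [|k' l']; auto. specialize (Hb k' ltac:(left; auto)). fold ei. lra.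
    + intros k [->|Hk].
      * fold ei. simpl. split; [|lra].
        assert (U / (64 * 64 ^ n) <= U / 64) by (apply Rmult_le_compat_l; [lra| apply Rinv_le_contravar; nra]).
        lra.
      * specialize (Hb k Hk). simpl. split; [|lra].
        apply Rle_trans with (ei / 32 / 64 ^ n); [|lra].
        replace (U / (64 * 64 ^ n)) with ((U / 64) / 64 ^ n) by (field; nra).
        unfold Rdiv. apply Rmult_le_compat_r; [left; apply Rinv_0_lt_compat; nra|]. lra.
Qed.

Lemma NN alpha (Hi : irrational alpha) rho n : rho > 0 ->
  exists l, NoDup l /\ length l = n /\ forall b : Z -> bool, exists t, forall k, In k l ->
    exists q K, 0 < q < rho /\ t + IZR k * alpha = q + IZR K /\ Wb (frac_part q) = b k.
Proof.
  intros Hr.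
  assert (H64 : 1 <= 64 ^ n) by (apply pow_R1_Rle; lra).
  set (E := Rmin (rho / 2) (/ (400 * 64 ^ n))).
  assert (HE1 : 0 < E) by (unfold E; apply Rmin_pos; [lra| apply Rinv_0_lt_compat; nra]).
  assert (HE2 : E <= rho / 2) by apply Rmin_l.
  assert (HE3 : E <= / (400 * 64 ^ n)) by apply Rmin_r.
  assert (HE4 : / (400 * 64 ^ n) <= / 400) by (apply Rinv_le_contravar; nra).
  assert (HE5 : 200 * E^2 <= E / 64 ^ n).
  { assert (E * (400 * 64 ^ n) <= 1).
    { apply Rmult_le_reg_r with (/ (400 * 64 ^ n)); [apply Rinv_0_lt_compat; nra|].
      rewrite Rmult_assoc, Rinv_r by nra. lra. }
    assert (X : 200 * E * 64 ^ n <= 1) by nra.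
    replace (200 * E^2) with ((200 * E * 64^n) * (E / 64^n)) by (field; nra).
    assert (0 < E / 64 ^ n) by (apply Rdiv_lt_0_compat; lra). nra. }
  destruct (build alpha Hi n E ltac:(lra)) as [l [Hlen [Hch Hb]]].
  exists l. split; [|split; auto].
  { apply (chainZ_nodup (fun k => frac_part (IZR k * alpha))); auto.
    intros x Hx. specialize (Hb x Hx). assert (0 < E / 64 ^ n) by (apply Rdiv_lt_0_compat; lra). lra. }
  intros b.
  set (L := map (fun k => (frac_part (IZR k * alpha), b k)) l).
  assert (HL : chainP E L).
  { unfold L. clear -Hch Hb HE5. induction l as [|k l IH]; simpl; auto.
    simpl in Hch. destruct Hch as [H1 H2]. split; [|split].
    - specialize (Hb k ltac:(left; auto)). lra.
    - destruct l as [|k' l']; simpl; auto.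
    - apply IH; auto. intros x Hx. apply Hb. right; auto. }
  destruct (sweep E L ltac:(lra) HL) as [t [Ht1 Ht2]].
  exists t. intros k Hk.
  assert (Hin : In (frac_part (IZR k * alpha), b k) L) by (unfold L; apply (in_map (fun k => (frac_part (IZR k * alpha), b k))); auto).
  destruct (Ht2 _ _ Hin) as [Q1 Q2].
  exists (t + frac_part (IZR k * alpha)), (Int_part (IZR k * alpha)). split; [|split].
  - specialize (Hb k Hk). assert (E^2 <= E / 400) by nra. lra.
  - rewrite (frac_decomp (IZR k * alpha)) at 1. ring.
  - rewrite W_small by lra. auto.
Qed.

Lemma notB_orbit0 alpha (Hi : irrational alpha) n : n <> 0%Z -> notB (frac_part (IZR n * alpha)).
Proof.
  intros Hn. pose proof (frac_decomp (IZR n * alpha)) as D.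
  split; [|split].
  - intros H0. rewrite H0 in D. apply Hn. apply (irr_int alpha Hi _ (Int_part (IZR n * alpha))). lra.
  - intros H0. rewrite H0 in D. assert (Hnz : (2 * n <> 0)%Z) by lia. apply Hnz.
    apply (irr_int alpha Hi _ (2 * Int_part (IZR n * alpha) + 1)).
    rewrite mult_IZR, plus_IZR, mult_IZR. simpl. lra.
  - intros c H0. destruct (rat_inv c) as [u [v [Hv Euv]]].
    apply Hn. apply (irr_rat alpha Hi n u v (Int_part (IZR n * alpha)) Hv). rewrite <- Euv, <- H0. lra.
Qed.

Lemma WinLC alpha (Hi : irrational alpha) (N : nat) : exists rho, rho > 0 /\
  forall n, n <> 0%Z -> (Z.abs n <= Z.of_nat N)%Z -> forall s, Rabs s < rho ->
    Wb (frac_part (s + IZR n * alpha)) = r alpha 0 n.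
Proof.
  destruct (finite_min (fun n rho => n <> 0%Z -> forall s, Rabs s < rho ->
       Wb (frac_part (s + IZR n * alpha)) = r alpha 0 n) N) as [rho [Hr HP]].
  - intros n. destruct (Z.eq_dec n 0) as [->|Hn].
    + exists 1. split; [lra|]. intros H; contradiction.
    + set (p := frac_part (IZR n * alpha)).
      destruct (LC_both p (frac_bounds _) (notB_orbit0 alpha Hi n Hn)) as [rho [Hr HC]].
      exists rho. split; auto. intros _ s Hs.
      unfold r. rewrite Rplus_0_l. fold p.
      rewrite <- (HC (p + s)).
      * f_equal. replace (s + IZR n * alpha) with ((p + s) + IZR (Int_part (IZR n * alpha))) by (unfold p, frac_part; ring).
        apply frac_plus_int.
      * replace (p + s - p) with s by ring. auto.
  - intros n r1 r2 Hrr HP0 Hn s Hs. apply HP0; auto. apply Rabs_def2 in Hs. apply Rabs_def1; lra.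
  - exists rho. split; auto.
Qed.

Lemma X_tame alpha (Hi : irrational alpha) : tame (Xs alpha).
Proof.
  intros [x0 [x1 [H0 [H1 [Hne Hall]]]]].
  assert (Hm : exists m, x0 m <> x1 m).
  { apply NNPP. intros Hn. apply Hne. apply functional_extensionality. intros m.
    apply NNPP. intros Hm. apply Hn. eauto. }
  destruct Hm as [m Hm].
  assert (Hcases : exists Nw, forall J, indep_set (Xs alpha) (fun y => agree Nw x0 y) (fun y => agree Nw x1 y) J ->
            ~ infinite_set J).
  { destruct (Req_dec (pi alpha x0) (pi alpha x1)) as [Heq|Hneq].
    - destruct (Req_dec (frac_part (pi alpha x0 + IZR m * alpha)) 0) as [Hz|Hz].
      + apply (caseB2 alpha Hi x0 x1 m); auto.
      + apply (caseB1 alpha Hi x0 x1 m); auto.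
    - apply caseA; auto. }
  destruct Hcases as [Nw HNw].
  destruct (Hall (fun y => agree Nw x0 y) (fun y => agree Nw x1 y)) as [J [HJ HJi]].
  - exists Nw. auto.
  - exists Nw. auto.
  - apply (HNw J HJ HJi).
Qed.

Lemma X_notnull alpha (Hi : irrational alpha) : ~ null (Xs alpha).
Proof.
  unfold null. intros Hn. apply Hn.
  set (x0 := r alpha 0).
  set (x1 := fun n => if Z.eq_dec n 0 then false else x0 n).
  assert (Hx00 : x0 0%Z = true).
  { unfold x0, r. replace (0 + IZR 0 * alpha) with 0 by (simpl; ring). apply W_zero. }
  assert (Hx1 : Xs alpha x1).
  { intros N. destruct (WinLC alpha Hi (Z.to_nat N)) as [rho [Hr HW]].
    destruct (NN alpha Hi rho 1 Hr) as [l [_ [Hlen Hb]]].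
    destruct (Hb (fun _ => false)) as [t Ht].
    destruct l as [|k l']; [discriminate|].
    destruct (Ht k ltac:(left; auto)) as [q [K [Hq [_ Wq]]]].
    exists q. intros n0 Hn0'. unfold x1. destruct (Z.eq_dec n0 0) as [->|Hn0].
    - unfold r. replace (q + IZR 0 * alpha) with q by (simpl; ring). auto.
    - unfold r. symmetry. apply HW; auto; [lia|]. rewrite Rabs_pos_eq; lra. }
  exists x0, x1. split; [apply X_r|]. split; auto. split.
  { intros E. assert (x0 0%Z = x1 0%Z) by (rewrite E; auto). unfold x1 in H.
    simpl in H. rewrite Hx00 in H. discriminate. }
  intros U0 U1 [N0 HU0] [N1 HU1] n.
  set (N := Z.max 0 (Z.max N0 N1)).
  destruct (WinLC alpha Hi (Z.to_nat N)) as [rho [Hr HW]].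
  destruct (NN alpha Hi rho n Hr) as [l [Hnd [Hlen Hb]]].
  exists l. split; auto. split; [lia|].
  intros I HI a.
  destruct (Hb (fun k => negb (a k))) as [t Ht].
  exists (r alpha t). split; [apply X_r|].
  intros i Hi'. specialize (HI i Hi'). destruct (Ht i HI) as [q [K [Hq [Eq Wq]]]].
  assert (Hag : agree N (if a i then x1 else x0) (shiftn i (r alpha t))).
  { intros m Hm. unfold shiftn, r.
    replace (t + IZR (m + i) * alpha) with ((q + IZR m * alpha) + IZR K) by (rewrite plus_IZR; lra).
    rewrite frac_plus_int.
    destruct (Z.eq_dec m 0) as [->|Hm0].
    - replace (q + IZR 0 * alpha) with q by (simpl; ring). rewrite Wq.
      destruct (a i); simpl; [unfold x1; simpl; auto| auto].
    - rewrite (HW m Hm0 ltac:(unfold N in *; lia) q) by (rewrite Rabs_pos_eq; lra).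
      destruct (a i); [unfold x1; destruct (Z.eq_dec m 0); [contradiction|auto]| auto]. }
  destruct (a i).
  - apply HU1; [apply X_shift, X_r|]. apply (agree_mono _ N); auto. unfold N; lia.
  - apply HU0; [apply X_shift, X_r|]. apply (agree_mono _ N); auto. unfold N; lia.
Qed.

Theorem mainTheorem16 (alpha : R) (Halpha : irrational alpha) :
  exists (X : config -> Prop) (pi : config -> R),
    subshift X /\ factor_map_onto_rotation X alpha pi /\
    almost_one_to_one X pi /\ tame X /\ ~ null X.
Proof.
  exists (Xs alpha), (pi alpha).
  split; [apply X_subshift|]. split; [apply X_factor; auto|].
  split; [apply X_a1; auto|]. split; [apply X_tame; auto| apply X_notnull; auto].
Qed.
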